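(* Let $a,b,c$ be signed indices (each a positive integer, possibly barred) with $|a|+|b|+|c|=w\ge 4$. If $(a,b)\ne(1,1)$ (with both unbarred), then $\zeta_\sqcup(a,b,c)=\zeta_*(a,b,c)$. Further, if $c=w-2$ or $c=\overline{w-2}$, then $$\zeta_\sqcup(1,1,c)=\zeta_*(1,1,c)+\tfrac12\zeta(2)\zeta(c).$$
   Context: Signed indices: a positive integer $s$ or a barred one $\bar s$, with $|s|=|\bar s|=s$. For signed indices, $\zeta(s_1,\dots,s_d)$ denotes the Euler sum $\sum_{n_1>\dots>n_d>0}\frac{z_1^{n_1}\cdots z_d^{n_d}}{n_1^{|s_1|}\cdots n_d^{|s_d|}}$ with $z_j=-1$ if $s_j$ is barred and $z_j=1$ otherwise; it converges iff $s_1\ne 1$ (unbarred). Regularized values: the truncated sum $\zeta^{(M)}$ (same sum restricted to $M\ge n_1$) has, as $M\to\infty$, an expansion $P(\log M+\gamma)+o(1)$ with $P$ a polynomial ($\gamma$ Euler's constant); $\zeta_*:=P(T)\in\mathbb{R}[T]$. With $a_k=\prod_{j\le k}z_j$, the iterated integral $\int_0^{1-\varepsilon}\left(\frac{dt}{t}\right)^{|s_1|-1}\frac{dt}{a_1-t}\cdots\left(\frac{dt}{t}\right)^{|s_d|-1}\frac{dt}{a_d-t}$ (over $1-\varepsilon>t_1>t_2>\dots>0$, forms read left to right) has, as $\varepsilon\to0^+$, an expansion $Q(-\log\varepsilon)+o(1)$ with $Q$ a polynomial; $\zeta_\sqcup:=Q(T)$. Both equal the Euler sum for convergent indices. *)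

(* Defs.v *)
From Stdlib Require Import Reals List.
From Coquelicot Require Import Coquelicot.
Import ListNotations.
Open Scope R_scope.

(* A signed index is a pair (k, barred) : nat * bool, with k = |s| >= 1
   (positivity is imposed as a hypothesis where needed); barred = true
   means the index is \bar k. *)
Definition sindex := (nat * bool)%type.

Definition zsgn (b : bool) : R := if b then -1 else 1.

Fixpoint sumR (M : nat) (f : nat -> R) : R :=
  match M with
  | O => 0
  | S m => sumR m f + f (S m)
  end.

(* Truncated Euler sum: sum over M >= n_1 > ... > n_d > 0 of
   prod z_j^{n_j} / n_j^{|s_j|}. *)
Fixpoint trunc (s : list sindex) (M : nat) : R :=
  match s with
  | [] => 1
  | (k, b) :: r =>
      sumR M (fun n => (zsgn b) ^ n / (INR n) ^ k * trunc r (Nat.pred n))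
  end.

Definition euler_sum (s : list sindex) : R := real (Lim_seq (trunc s)).

Definition euler_gamma : R :=
  real (Lim_seq (fun n => sumR n (fun k => / INR k) - ln (INR n))).

Fixpoint peval (p : list R) (T : R) : R :=
  match p with
  | [] => 0
  | c :: q => c + T * peval q T
  end.

(* zeta_* : the polynomial P with zeta^(M)(s) = P(log M + gamma) + o(1). *)
Definition stuffle_reg (s : list sindex) (P : list R) : Prop :=
  is_lim_seq (fun M => trunc s M - peval P (ln (INR M) + euler_gamma)) 0.

(* Letters of iterated integrals: None = dt/t, Some a = dt/(a - t). *)
Definition omega (l : option R) (t : R) : R :=
  match l with
  | None => / t
  | Some a => / (a - t)
  end.

(* Word (dt/t)^{|s_1|-1} dt/(a_1-t) ... (dt/t)^{|s_d|-1} dt/(a_d-t),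
   with a_k = z_1 ... z_k; acc is the running product. *)
Fixpoint word_aux (acc : R) (s : list sindex) : list (option R) :=
  match s with
  | [] => []
  | (k, b) :: r =>
      let a := acc * zsgn b in
      repeat None (Nat.pred k) ++ Some a :: word_aux a r
  end.

Definition word (s : list sindex) : list (option R) := word_aux 1 s.

Fixpoint iter_int (w : list (option R)) (x : R) : R :=
  match w with
  | [] => 1
  | l :: r => RInt (fun t => omega l t * iter_int r t) 0 x
  end.

(* zeta_sh : the polynomial Q with
   iter_int (word s) (1 - eps) = Q(-log eps) + o(1) as eps -> 0+. *)
Definition shuffle_reg (s : list sindex) (Q : list R) : Prop :=
  filterlim (fun eps => iter_int (word s) (1 - eps) - peval Q (- ln eps))
    (at_right 0) (locally 0).

(* Main.v *)
Require Import Defs.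
From Stdlib Require Import Reals List.
From Coquelicot Require Import Coquelicot.
From Stdlib Require Import Lra Lia.
Import ListNotations.
Open Scope R_scope.


Ltac toR := match goal with |- ?a = ?b => change (@eq R a b) end.

Fixpoint coef (w : list (option R)) : nat -> R :=
  match w with
  | [] => fun n => match n with O => 1 | _ => 0 end
  | None :: r => PS_Int (PS_decr_1 (coef r))
  | Some a :: r => PS_Int (PS_mult (coef r) (fun n => (/ a) ^ (S n)))
  end.

Fixpoint valid (w : list (option R)) : Prop :=
  match w with
  | [] => True
  | None :: r => r <> [] /\ valid r
  | Some a :: r => (a = 1 \/ a = -1) /\ valid r
  end.

Lemma coef0 w : w <> [] -> coef w 0 = 0.
Proof. destruct w as [|[a|] r]; simpl; auto; congruence. Qed.

Lemma radius_bounded (a : nat -> R) B :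
  (forall n, Rabs (a n) <= B) -> Rbar_le 1 (CV_radius a).
Proof.
  intros H. destruct (CV_radius_bounded a) as [Hub _].
  apply Hub. exists B. intros n. rewrite pow1, Rmult_1_r. apply H.
Qed.

Lemma radius_lt (a : nat -> R) B x :
  (forall n, Rabs (a n) <= B) -> Rabs x < 1 -> Rbar_lt (Rabs x) (CV_radius a).
Proof.
  intros H Hx. generalize (radius_bounded a B H).
  destruct (CV_radius a) as [r| |]; simpl; auto; lra.
Qed.

Lemma sum_abs_bound (f : nat -> R) m :
  (forall i, Rabs (f i) <= 1) -> Rabs (sum_f_R0 f m) <= INR (S m).
Proof.
  intros H. induction m as [|m IH]; simpl sum_f_R0.
  - simpl. specialize (H 0%nat). lra.
  - rewrite S_INR. eapply Rle_trans. apply Rabs_triang. specialize (H (S m)). lra.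
Qed.

Lemma inv_pm1 a : a = 1 \/ a = -1 -> / a = a.
Proof. intros [->| ->]; field. Qed.

Lemma pow_pm1_abs a n : a = 1 \/ a = -1 -> Rabs (a ^ n) = 1.
Proof. intros H. rewrite <- RPow_abs. destruct H as [->| ->]; rewrite ?Rabs_R1, ?Rabs_m1, pow1; auto. Qed.

Lemma coef_bound w : valid w -> forall n, Rabs (coef w n) <= 1.
Proof.
  induction w as [|[a|] r IH]; cbn [coef valid]; intros Hv n.
  - destruct n; rewrite ?Rabs_R1, ?Rabs_R0; lra.
  - destruct Hv as [Ha Hv]. destruct n as [|m].
    + cbn [PS_Int]. rewrite Rabs_R0; lra.
    + cbn [PS_Int]. unfold Rdiv. rewrite Rabs_mult.
      assert (Hm : Rabs (PS_mult (coef r) (fun n : nat => (/ a) ^ S n) m) <= INR (S m)).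
      { unfold PS_mult. apply sum_abs_bound. intros i. rewrite Rabs_mult.
        rewrite inv_pm1 by auto. rewrite pow_pm1_abs by auto. rewrite Rmult_1_r. apply IH; auto. }
      assert (HS : 0 < INR (S m)) by (apply lt_0_INR; lia).
      rewrite Rabs_inv, (Rabs_right (INR (S m))) by lra.
      apply (Rmult_le_reg_r (INR (S m))); auto. rewrite Rmult_assoc, Rinv_l by lra. lra.
  - destruct Hv as [Ha Hv]. destruct n as [|m].
    + cbn [PS_Int]. rewrite Rabs_R0; lra.
    + cbn [PS_Int]. unfold PS_decr_1, Rdiv. rewrite Rabs_mult.
      assert (HS : 1 <= INR (S m)) by (apply (le_INR 1); lia).
      rewrite Rabs_inv, (Rabs_right (INR (S m))) by lra.
      specialize (IH Hv (S m)).
      assert (0 < / INR (S m) <= 1).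
      { split. apply Rinv_0_lt_compat; lra. rewrite <- Rinv_1. apply Rinv_le_contravar; lra. }
      assert (0 <= Rabs (coef r (S m))) by apply Rabs_pos. nra.
Qed.

Lemma geom_pseries a t : (a = 1 \/ a = -1) -> Rabs t < 1 ->
  / (a - t) = PSeries (fun n => (/ a) ^ (S n)) t.
Proof.
  intros Ha Ht. unfold PSeries.
  rewrite (Series_ext _ (fun k => / a * (t / a) ^ k)).
  2:{ intros n. simpl. unfold Rdiv. rewrite Rpow_mult_distr. ring. }
  rewrite Series_scal_l, Series_geom.
  2:{ unfold Rdiv. rewrite inv_pm1 by auto. rewrite Rabs_mult. replace (Rabs a) with 1 by (destruct Ha as [-> | ->]; rewrite ?Rabs_R1, ?Rabs_m1; auto). lra. }
  apply Rabs_def2 in Ht. destruct Ha as [-> | ->]; field; lra.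

Qed.

Lemma valid_bound w : valid w -> forall x, Rabs x < 1 -> Rbar_lt (Rabs x) (CV_radius (coef w)).
Proof. intros Hv x Hx. apply (radius_lt _ 1); auto. apply coef_bound; auto. Qed.

Lemma iter_ps w : valid w -> forall x, 0 <= x < 1 -> iter_int w x = PSeries (coef w) x.
Proof.
  induction w as [|[a|] r IH]; intros Hv x Hx.
  - cbn [iter_int coef]. rewrite PSeries_decr_1.
    + rewrite (PSeries_ext _ (fun _ => 0)) by (intros; reflexivity).
      rewrite PSeries_const_0. ring.
    + apply CV_radius_inside. apply (valid_bound []); simpl; auto. rewrite Rabs_right; lra.
  - destruct Hv as [Ha Hv]. cbn [iter_int coef omega].
    assert (Hr : Rbar_lt (Rabs x) (CV_radius (PS_mult (coef r) (fun n : nat => (/ a) ^ S n)))).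
    { rewrite <- CV_radius_Int. apply (valid_bound (Some a :: r)); simpl; auto. rewrite Rabs_right; lra. }
    rewrite <- RInt_PSeries by exact Hr.
    apply RInt_ext. rewrite Rmin_left, Rmax_right by lra. intros t Ht.
    rewrite IH by (auto; lra). rewrite PSeries_mult.
    + rewrite <- geom_pseries; auto. apply Rmult_comm. rewrite Rabs_right; lra.
    + apply valid_bound; auto. rewrite Rabs_right; lra.
    + apply (radius_lt _ 1). intros n. rewrite inv_pm1 by auto. rewrite pow_pm1_abs; auto. lra.
      rewrite Rabs_right; lra.
  - destruct Hv as [Hne Hv]. cbn [iter_int coef omega].
    assert (Hr : Rbar_lt (Rabs x) (CV_radius (PS_decr_1 (coef r)))).
    { rewrite CV_radius_decr_1. apply valid_bound; auto. rewrite Rabs_right; lra. }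
    rewrite <- RInt_PSeries by exact Hr.
    apply RInt_ext. rewrite Rmin_left, Rmax_right by lra. intros t Ht.
    rewrite IH by (auto; lra). rewrite PSeries_decr_1.
    + rewrite coef0 by auto. change (/ t * (0 + t * PSeries (PS_decr_1 (coef r)) t) = PSeries (PS_decr_1 (coef r)) t). field. lra.
    + apply CV_radius_inside, valid_bound; auto. rewrite Rabs_right; lra.
Qed.

Definition Delta (s : list sindex) (n : nat) : R :=
  match n with O => trunc s 0 | S m => trunc s (S m) - trunc s m end.

Lemma coef_repeat j v n : v <> [] ->
  coef (repeat None j ++ v) n =
  match n with O => 0 | S m => coef v (S m) / INR (S m) ^ j end.
Proof.
  intros Hv. induction j as [|j IH].
  - destruct n; simpl. apply coef0; auto. field.
  - destruct n as [|m]; cbn [repeat app coef PS_Int]. reflexivity.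
    unfold PS_decr_1. rewrite IH. toR. change (INR (S m) ^ S j) with (INR (S m) * INR (S m) ^ j). field. split.
    apply pow_nonzero. apply not_0_INR; lia. apply not_0_INR; lia.
Qed.

Lemma sum_Delta r m : sum_f_R0 (Delta r) m = trunc r m.
Proof. induction m; simpl; auto. simpl in IHm. rewrite IHm. ring. Qed.

Lemma zsgn_pm1 b : zsgn b = 1 \/ zsgn b = -1.
Proof. destruct b; simpl; auto. Qed.

Lemma coef_word_aux s : forall acc, (acc = 1 \/ acc = -1) -> List.Forall (fun p => (0 < fst p)%nat) s ->
  valid (word_aux acc s) /\ forall n, coef (word_aux acc s) n = acc ^ n * Delta s n.
Proof.
  induction s as [|[k b] r IH]; intros acc Hacc Hpos.
  - split. simpl; auto. intros [|n]; simpl; ring.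
  - inversion Hpos as [|? ? Hk Hpos']; subst. simpl in Hk.
    set (a := acc * zsgn b).
    assert (Ha : a = 1 \/ a = -1).
    { unfold a. destruct Hacc as [-> | ->]; destruct (zsgn_pm1 b) as [-> | ->]; lra. }
    destruct (IH a Ha Hpos') as [Hv Hc].
    cbn [word_aux]. fold a. split.
    + clear -Hv Ha. induction (Nat.pred k); simpl; auto. split; auto.
      destruct n; simpl; congruence.
    + intros n. rewrite coef_repeat by congruence.
      destruct n as [|m].
      * simpl. ring.
      * cbn [coef PS_Int]. unfold PS_mult.
        rewrite (sum_eq _ (fun i => Delta r i * a ^ (S m))).
        2:{ intros i Hi. rewrite Hc. rewrite inv_pm1 by auto.
            replace (a ^ S m) with (a^i * a^(S (m-i))) by (rewrite <- pow_add; f_equal; lia). ring. }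
        rewrite <- scal_sum, sum_Delta.
        unfold Delta. cbn [trunc sumR]. 
        replace (Nat.pred (S m)) with m by reflexivity.
        unfold a. rewrite Rpow_mult_distr.
        replace k with (S (Nat.pred k)) at 2 by lia. change (INR (S m) ^ S (Nat.pred k)) with (INR (S m) * INR (S m) ^ (Nat.pred k)).
        field. split. apply pow_nonzero. apply not_0_INR; lia. apply not_0_INR; lia.
Qed.

Lemma iter_word s : List.Forall (fun p => (0 < fst p)%nat) s ->
  forall x, 0 <= x < 1 -> iter_int (word s) x = PSeries (Delta s) x.
Proof.
  intros Hpos x Hx. destruct (coef_word_aux s 1 (or_introl eq_refl) Hpos) as [Hv Hc].
  unfold word. rewrite iter_ps by auto. apply PSeries_ext. intros n. rewrite Hc, pow1. ring.
Qed.


Definition harm (n : nat) : R := sumR n (fun k => / INR k).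

Lemma H_S n : harm (S n) = harm n + / INR (S n).
Proof. reflexivity. Qed.
Lemma H_0 : harm 0 = 0.
Proof. reflexivity. Qed.

Lemma H_nonneg n : 0 <= harm n.
Proof. induction n. rewrite H_0; lra. rewrite H_S.
  assert (0 < / INR (S n)) by (apply Rinv_0_lt_compat, lt_0_INR; lia). lra. Qed.

Lemma inv_S_bound n : 0 < / INR (S n) <= 1.
Proof. split. apply Rinv_0_lt_compat, lt_0_INR; lia. rewrite <- Rinv_1. apply Rinv_le_contravar. lra. apply (le_INR 1); lia. Qed.

Lemma H_le_n n : harm n <= INR n.
Proof. induction n. rewrite H_0; simpl; lra. rewrite H_S.
  pose proof (inv_S_bound n). set (q := / INR (S n)) in *. rewrite S_INR. lra. Qed.

Lemma H_ge1 n : (1 <= n)%nat -> 1 <= harm n.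
Proof. intros Hn. induction Hn. rewrite H_S, H_0. simpl. lra. rewrite H_S.
  pose proof (inv_S_bound m). lra. Qed.

Lemma H_sq_le n : harm n ^ 2 <= 4 * INR n.
Proof.
  induction n. rewrite H_0; simpl; lra.
  rewrite H_S. pose proof (H_le_n n). pose proof (H_nonneg n).
  pose proof (inv_S_bound n).
  assert (harm n * / INR (S n) <= 1).
  { apply (Rmult_le_reg_r (INR (S n))). apply lt_0_INR; lia.
    rewrite Rmult_assoc, Rinv_l, S_INR by (apply not_0_INR; lia). lra. }
  set (q := / INR (S n)) in *. rewrite S_INR. nra.
Qed.

Lemma ln_step n : (1 <= n)%nat ->
  / INR (S n) <= ln (INR (S n)) - ln (INR n) <= / INR n.
Proof.
  intros Hn. assert (Ha : 1 <= INR n) by (apply (le_INR 1); auto).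
  rewrite S_INR. set (a := INR n) in *. split.
  - assert (Hq : a / (a + 1) <= exp (- / (a + 1))).
    { eapply Rle_trans; [|apply exp_ineq1_le]. right. field. lra. }
    apply ln_le in Hq. rewrite ln_exp, ln_div in Hq by lra. lra.
    apply Rdiv_lt_0_compat; lra.
  - assert (Hq : (a + 1) / a <= exp (/ a)).
    { eapply Rle_trans; [|apply exp_ineq1_le]. right. field. lra. }
    apply ln_le in Hq. rewrite ln_exp, ln_div in Hq by lra. lra.
    apply Rdiv_lt_0_compat; lra.
Qed.

Definition gu (n : nat) := harm (S n) - ln (INR (S n)).
Definition gv (n : nat) := harm n - ln (INR (S n)).

Lemma gu_decr m k : gu (m + k) <= gu m.
Proof.
  induction k. rewrite Nat.add_0_r; lra.
  eapply Rle_trans; [|apply IHk]. replace (m + S k)%nat with (S (m + k)) by lia.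
  unfold gu. rewrite H_S. pose proof (ln_step (S (m + k)) ltac:(lia)). lra.
Qed.

Lemma gv_incr m k : gv m <= gv (m + k).
Proof.
  induction k. rewrite Nat.add_0_r; lra.
  eapply Rle_trans; [apply IHk|]. replace (m + S k)%nat with (S (m + k)) by lia.
  unfold gv. rewrite H_S. pose proof (ln_step (S (m + k)) ltac:(lia)). lra.
Qed.

Lemma gv_le_gu m : gv (S m) <= gu m.
Proof.
  unfold gv, gu. assert (ln (INR (S m)) <= ln (INR (S (S m)))).
  { apply ln_le. apply lt_0_INR; lia. apply le_INR; lia. } lra.
Qed.

Lemma gamma_bounds n : (1 <= n)%nat ->
  harm n - ln (INR (S n)) <= euler_gamma <= harm n - ln (INR n).
Proof.
  intros Hn.
  assert (Hl : is_lim_seq gu (Lim_seq gu)).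
  { apply Lim_seq_correct, ex_lim_seq_decr. intros m. rewrite <- Nat.add_1_r. apply gu_decr. }
  assert (E : euler_gamma = real (Lim_seq gu)).
  { unfold euler_gamma. rewrite <- (Lim_seq_incr_1 (fun n => sumR n (fun k => / INR k) - ln (INR n))). reflexivity. }
  destruct n as [|n]; [lia|].
  assert (A1 : Rbar_le (Lim_seq gu) (gu n)).
  { apply (is_lim_seq_le_loc gu (fun _ => gu n)); auto.
    exists n. intros m Hm. replace m with (n + (m - n))%nat by lia. apply gu_decr.
    apply is_lim_seq_const. }
  assert (A2 : Rbar_le (gv (S n)) (Lim_seq gu)).
  { apply (is_lim_seq_le_loc (fun _ => gv (S n)) gu); auto.
    exists n. intros m Hm. eapply Rle_trans; [|apply gv_le_gu].
    replace (S m) with (S n + (m - n))%nat by lia. apply gv_incr.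
    apply is_lim_seq_const. }
  rewrite E. destruct (Lim_seq gu) as [l| |]; cbn [Rbar_le real] in *; try contradiction.
  unfold gu, gv in *. lra.
Qed.

Lemma gamma_close n : (1 <= n)%nat -> Rabs (harm n - ln (INR n) - euler_gamma) <= / INR n.
Proof.
  intros Hn. pose proof (gamma_bounds n Hn). pose proof (ln_step n Hn).
  rewrite Rabs_right; lra.
Qed.


Lemma poly_const p : forall (t : nat -> R) (L : R), is_lim_seq t p_infty ->
  is_lim_seq (fun n => peval p (t n)) L -> forall T, peval p T = L.
Proof.
  induction p as [|c q IH]; intros t L Ht Hl T; simpl in *.
  - apply is_lim_seq_unique in Hl. rewrite Lim_seq_const in Hl. congruence.
  - assert (Hq : forall T, peval q T = 0).
    { apply (IH t 0 Ht). 
      apply (is_lim_seq_ext_loc (fun n => (c + t n * peval q (t n) - c) / t n)).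
      + destruct (proj2 (is_lim_seq_spec t p_infty) Ht 0) as [N HN].
        exists N. intros n Hn. specialize (HN n Hn). field. lra.
      + eapply is_lim_seq_div. apply (is_lim_seq_minus' _ _ L c). exact Hl. apply is_lim_seq_const.
        exact Ht. discriminate. simpl. apply is_Rbar_div_p_infty. }
    rewrite Hq. 
    apply (is_lim_seq_ext _ (fun _ => c)) in Hl. apply is_lim_seq_unique in Hl.
    rewrite Lim_seq_const in Hl. injection Hl. lra.
    intros n. rewrite Hq. ring.
Qed.

Fixpoint pneg (q : list R) : list R :=
  match q with [] => [] | b :: q' => (- b) :: pneg q' end.

Fixpoint pdiff (p q : list R) : list R :=
  match p with
  | [] => pneg q
  | a :: p' => match q with [] => a :: p' | b :: q' => (a - b) :: pdiff p' q' end
  end.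

Lemma pneg_ok q T : peval (pneg q) T = - peval q T.
Proof. induction q; simpl; [ring|]. rewrite IHq. ring. Qed.

Lemma pdiff_ok p : forall q T, peval (pdiff p q) T = peval p T - peval q T.
Proof.
  induction p as [|a p IH]; intros q T.
  - simpl. rewrite pneg_ok. ring.
  - destruct q as [|b q]; simpl; try rewrite IH; simpl; ring.
Qed.

Lemma poly_eq p q (t : nat -> R) : is_lim_seq t p_infty ->
  is_lim_seq (fun n => peval p (t n) - peval q (t n)) 0 -> forall T, peval p T = peval q T.
Proof.
  intros Ht Hl T. assert (E := poly_const (pdiff p q) t 0 Ht).
  assert (E2 := E (is_lim_seq_ext _ _ _ (fun n => eq_sym (pdiff_ok p q (t n))) Hl) T). rewrite pdiff_ok in E2.
  lra.
Qed.

Lemma peval_split P T : peval P T = nth 0 P 0 + T * (nth 1 P 0 + T * peval (skipn 2 P) T).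
Proof. destruct P as [|a [|b P]]; simpl; ring. Qed.

Lemma lim_ln_INR : is_lim_seq (fun n => ln (INR n)) p_infty.
Proof.
  apply (is_lim_comp_seq ln INR p_infty p_infty). apply is_lim_ln_p.
  exists 0%nat. intros; discriminate. apply is_lim_seq_INR.
Qed.

Lemma lim_lnINR_div : is_lim_seq (fun n => ln (INR n) / INR n) 0.
Proof.
  apply (is_lim_comp_seq (fun y => ln y / y) INR p_infty 0). apply is_lim_div_ln_p.
  exists 0%nat. intros; discriminate. apply is_lim_seq_INR.
Qed.

Lemma lim_inv_INR : is_lim_seq (fun n => / INR n) 0.
Proof.
  replace (Finite 0) with (Rbar_inv p_infty) by reflexivity.
  apply is_lim_seq_inv. apply is_lim_seq_INR. discriminate.
Qed.


Lemma lim_right0 (f : R -> R) L :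
  (forall eps, 0 < eps -> exists d, 0 < d /\ forall y, 0 < y < d -> Rabs (f y - L) < eps) ->
  filterlim f (at_right 0) (locally L).
Proof.
  intros Hf. apply filterlim_locally. intros [eps Heps].
  destruct (Hf eps Heps) as [d [Hd Hy]]. exists (mkposreal d Hd).
  intros y Hb Hp. apply Hy. split; auto.
  unfold ball in Hb; simpl in Hb. unfold AbsRing_ball, abs, minus, plus, opp in Hb; simpl in Hb.
  rewrite Ropp_0, Rplus_0_r in Hb. apply Rabs_def2 in Hb. lra.
Qed.

Lemma lim_right0_elim (f : R -> R) L : filterlim f (at_right 0) (locally L) ->
  forall eps, 0 < eps -> exists d, 0 < d /\ forall y, 0 < y < d -> Rabs (f y - L) < eps.
Proof.
  intros Hf eps Heps. apply filterlim_locally with (eps := mkposreal eps Heps) in Hf.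
  destruct Hf as [[d Hd] Hy]. exists d. split; auto. intros y Hy'.
  specialize (Hy y). assert (B : ball 0 d y).
  { unfold ball; simpl. unfold AbsRing_ball, abs, minus, plus, opp; simpl.
    rewrite Ropp_0, Rplus_0_r. rewrite Rabs_right; lra. }
  specialize (Hy B (proj1 Hy')). unfold ball in Hy; simpl in Hy.
  unfold AbsRing_ball, abs, minus, plus, opp in Hy; simpl in Hy. exact Hy.
Qed.

Lemma pow_le1 x n : 0 <= x <= 1 -> x ^ n <= 1.
Proof. intros Hx. induction n; simpl. lra. assert (0 <= x ^ n) by (apply pow_le; lra). nra. Qed.

Lemma Series_zero : Series (fun _ => 0) = 0.
Proof. rewrite (Series_ext _ (fun n => 0 * 0)) by (intros; ring). rewrite Series_scal_l. ring. Qed.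

Lemma Series_nonneg (a : nat -> R) : (forall n, 0 <= a n) -> ex_series a -> 0 <= Series a.
Proof. intros Ha Hex. rewrite <- Series_zero. apply Series_le; auto. intros n; split; auto; lra. Qed.

Lemma bernoulli e n : 0 <= e <= 1 -> 1 - INR n * e <= (1 - e) ^ n.
Proof.
  intros He. induction n. simpl; lra.
  rewrite S_INR. simpl. assert (0 <= INR n) by apply pos_INR. 
  assert (0 <= (1 - e) ^ n) by (apply pow_le; lra). nra.
Qed.

Lemma partial_lower (a : nat -> R) e N : 0 <= e <= 1 -> (forall n, 0 <= a n <= 1) ->
  sum_f_R0 a N - INR N ^ 2 * e <= sum_f_R0 (fun n => a n * (1 - e) ^ n) N.
Proof.
  intros He Ha. induction N. simpl. specialize (Ha 0%nat). lra.
  simpl sum_f_R0. rewrite S_INR. pose proof (bernoulli e (S N) He). rewrite S_INR in H.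
  specialize (Ha (S N)). assert (0 <= INR N) by apply pos_INR.
  assert (a (S N) * (1 - (INR N + 1) * e) <= a (S N) * (1 - e) ^ S N) by (apply Rmult_le_compat_l; lra).
  assert (0 <= (1 - a (S N)) * ((INR N + 1) * e)) by (apply Rmult_le_pos; nra).
  assert (0 <= INR N * e) by nra.
  change ((1 - e) ^ S N) with ((1-e)*(1-e)^N) in H1. nra.
Qed.

Lemma abel_pos (a : nat -> R) : (forall n, 0 <= a n <= 1) -> ex_series a ->
  filterlim (fun eps => PSeries a (1 - eps)) (at_right 0) (locally (Series a)).
Proof.
  intros Ha Hex. apply lim_right0. intros eta Heta.
  assert (Hc : is_lim_seq (sum_n a) (Series a)) by exact (Series_correct _ Hex).
  destruct (proj2 (is_lim_seq_spec _ _) Hc (mkposreal (eta/2) ltac:(lra))) as [N HN].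
  specialize (HN N (le_n _)). simpl in HN. rewrite sum_n_Reals in HN.
  set (d := Rmin 1 (eta / (2 * (INR N ^ 2 + 1)))).
  assert (Hd : 0 < d). { unfold d. apply Rmin_glb_lt. lra. apply Rdiv_lt_0_compat. lra.
    assert (0 <= INR N ^2) by (apply pow2_ge_0). lra. }
  exists d. split; auto. intros y Hy.
  assert (Hy1 : y <= 1) by (pose proof (Rmin_l 1 (eta / (2 * (INR N ^ 2 + 1)))); fold d in H; lra).
  assert (Hy2 : INR N ^ 2 * y <= eta / 2).
  { pose proof (Rmin_r 1 (eta / (2 * (INR N ^ 2 + 1)))). fold d in H.
    assert (0 <= INR N ^2) by (apply pow2_ge_0).
    assert (y * (2 * (INR N ^ 2 + 1)) <= eta).
    { apply (Rmult_le_reg_r (/ (2 * (INR N ^ 2 + 1)))). apply Rinv_0_lt_compat; lra.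
      rewrite Rmult_assoc, Rinv_r by lra. lra. }
    nra. }
  assert (Hexy : ex_series (fun k => a k * (1 - y) ^ k)).
  { apply (@ex_series_le R_AbsRing R_CompleteNormedModule _ a); auto. intros n. unfold norm; simpl. unfold abs; simpl.
    specialize (Ha n). assert (0 <= (1-y)^n <= 1). split. apply pow_le; lra. apply pow_le1; lra.
    rewrite Rabs_right; nra. }
  assert (Up : PSeries a (1 - y) <= Series a).
  { unfold PSeries. apply Series_le; auto. intros n. specialize (Ha n).
    assert (0 <= (1-y)^n <= 1). split. apply pow_le; lra. apply pow_le1; lra. nra. }
  assert (Lo : sum_f_R0 (fun n => a n * (1 - y) ^ n) N <= PSeries a (1 - y)).
  { unfold PSeries. rewrite (Series_incr_n _ (S N)) by (auto; lia). simpl pred.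
    assert (0 <= Series (fun k => a (S N + k)%nat * (1 - y) ^ (S N + k))).
    { apply Series_nonneg. intros n. specialize (Ha (S N + n)%nat).
        assert (0 <= (1-y)^(S N + n)) by (apply pow_le; lra). nra.
      apply (ex_series_incr_n (fun k => a k * (1 - y) ^ k) (S N)). auto. }
    lra. }
  pose proof (partial_lower a y N ltac:(lra) Ha).
  apply Rabs_def1; apply Rabs_def2 in HN; lra.
Qed.

Lemma sum_abs_le (f : nat -> R) B m : (forall i, Rabs (f i) <= B) -> sum_f_R0 f m <= INR (S m) * B.
Proof.
  intros H. induction m as [|m IH]; simpl sum_f_R0.
  - simpl. specialize (H 0%nat). apply Rabs_le_between in H. lra.
  - rewrite S_INR. specialize (H (S m)). apply Rabs_le_between in H. lra.
Qed.

Lemma abel_zero (e : nat -> R) B : (forall n, Rabs (e n) <= B) -> is_lim_seq e 0 ->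
  filterlim (fun eps => eps * PSeries e (1 - eps)) (at_right 0) (locally 0).
Proof.
  intros HB He. apply lim_right0. intros eta Heta.
  assert (B0 : 0 <= B) by (specialize (HB 0%nat); pose proof (Rabs_pos (e 0%nat)); lra).
  destruct (proj2 (is_lim_seq_spec _ _) He (mkposreal (eta/2) ltac:(lra))) as [N HN].
  simpl in HN.
  set (K := INR (S N) * B + 1).
  assert (HK : 0 < K) by (unfold K; assert (0 <= INR (S N)) by apply pos_INR; nra).
  set (d := Rmin 1 (eta / (2 * K))).
  assert (Hd : 0 < d). { unfold d. apply Rmin_glb_lt. lra. apply Rdiv_lt_0_compat; lra. }
  exists d. split; auto. intros y Hy.
  assert (Hy1 : y <= 1) by (pose proof (Rmin_l 1 (eta / (2 * K))); fold d in H; lra).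
  assert (Hy2 : y * K <= eta / 2).
  { pose proof (Rmin_r 1 (eta / (2 * K))). fold d in H.
    assert (y * (2 * K) <= eta).
    { apply (Rmult_le_reg_r (/ (2 * K))). apply Rinv_0_lt_compat; lra.
      rewrite Rmult_assoc, Rinv_r by lra. lra. }
    lra. }
  set (x := 1 - y).
  assert (Hx : 0 <= x < 1) by (unfold x; lra).
  assert (Hgeo : ex_series (fun n => x ^ n)).
  { apply ex_series_geom. rewrite Rabs_right; lra. }
  assert (Habs : ex_series (fun n => Rabs (e n * x ^ n))).
  { apply (@ex_series_le R_AbsRing R_CompleteNormedModule _ (fun n => B * x ^ n)).
    intros n. unfold norm; simpl. unfold abs; simpl. rewrite Rabs_Rabsolu, Rabs_mult.
    rewrite (Rabs_right (x ^ n)) by (apply Rle_ge, pow_le; lra).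
    apply Rmult_le_compat_r. apply pow_le; lra. auto.
    apply (ex_series_scal_l B (fun n => x ^ n)) in Hgeo. exact Hgeo. }
  rewrite Rminus_0_r, Rabs_mult, (Rabs_right y) by lra.
  unfold PSeries. fold x.
  eapply Rle_lt_trans. apply Rmult_le_compat_l. lra. apply Series_Rabs. exact Habs.
  rewrite (Series_incr_n _ (S N)) by (auto; lia). simpl pred.
  assert (P1 : sum_f_R0 (fun n => Rabs (e n * x ^ n)) N <= INR (S N) * B).
  { apply sum_abs_le. intros i. rewrite Rabs_Rabsolu, Rabs_mult.
    rewrite (Rabs_right (x ^ i)) by (apply Rle_ge, pow_le; lra).
    assert (x ^ i <= 1) by (apply pow_le1; lra). specialize (HB i).
    assert (0 <= Rabs (e i)) by apply Rabs_pos. assert (0 <= x^i) by (apply pow_le; lra). nra. }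
  assert (P2 : Series (fun k => Rabs (e (S N + k)%nat * x ^ (S N + k))) <= eta / 2 * / y).
  { replace (/ y) with (/ (1 - x)) by (unfold x; f_equal; ring).
    rewrite <- Series_geom by (rewrite Rabs_right; lra). rewrite <- Series_scal_l.
    apply Series_le.
    - intros n. split. apply Rabs_pos. rewrite Rabs_mult.
      rewrite (Rabs_right (x ^ _)) by (apply Rle_ge, pow_le; lra).
      assert (Rabs (e (S N + n)%nat) < eta / 2) by (rewrite <- (Rminus_0_r (e _)); apply HN; lia).
      assert (x ^ (S N + n) <= x ^ n).
      { rewrite pow_add. assert (x ^ S N <= 1) by (apply pow_le1; lra).
        assert (0 <= x ^ S N) by (apply pow_le; lra). assert (0 <= x ^ n) by (apply pow_le; lra). nra. }
      assert (0 <= x ^ (S N + n)) by (apply pow_le; lra). 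
      assert (0 <= Rabs (e (S N + n)%nat)) by apply Rabs_pos. nra.
    - apply (ex_series_scal_l (eta/2) (fun n => x ^ n)) in Hgeo. exact Hgeo. }
  assert (y * (eta / 2 * / y) = eta / 2) by (field; lra).
  assert (y * (INR (S N) * B) <= y * K - y) by (unfold K; lra).
  assert (0 <= y * (INR (S N) * B)) by (assert (0 <= INR (S N)) by apply pos_INR; apply Rmult_le_pos; [lra| nra]).
  nra.
Qed.


Lemma RInt_log1 x : 0 <= x < 1 -> RInt (fun s => / (1 - s) * 1) 0 x = - ln (1 - x).
Proof.
  intros Hx. apply is_RInt_unique.
  replace (- ln (1 - x)) with (minus (- ln (1 - x)) (- ln (1 - 0))).
  2:{ rewrite Rminus_0_r, ln_1. unfold minus, plus, opp; simpl. toR. field. }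
  apply (is_RInt_derive (fun t => - ln (1 - t))).
  - intros t Ht. rewrite Rmin_left, Rmax_right in Ht by lra.
    auto_derive. lra. toR. unfold Rminus. field. lra.
  - intros t Ht. rewrite Rmin_left, Rmax_right in Ht by lra.
    apply (@ex_derive_continuous R_AbsRing R_NormedModule). auto_derive. lra.
Qed.

Lemma RInt_log2 x : 0 <= x < 1 -> RInt (fun s => / (1 - s) * (- ln (1 - s))) 0 x = ln (1 - x) ^ 2 / 2.
Proof.
  intros Hx. apply is_RInt_unique.
  replace (ln (1 - x) ^ 2 / 2) with (minus (ln (1 - x) ^ 2 / 2) (ln (1 - 0) ^ 2 / 2)).
  2:{ rewrite Rminus_0_r, ln_1. unfold minus, plus, opp; simpl. toR. field. }
  apply (is_RInt_derive (fun t => ln (1 - t) ^ 2 / 2)).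
  - intros t Ht. rewrite Rmin_left, Rmax_right in Ht by lra.
    auto_derive. lra. toR. unfold Rminus. field. lra.
  - intros t Ht. rewrite Rmin_left, Rmax_right in Ht by lra.
    apply (@ex_derive_continuous R_AbsRing R_NormedModule). auto_derive. lra.
Qed.

Lemma pos1 : List.Forall (fun p : sindex => (0 < fst p)%nat) [(1%nat, false)].
Proof. repeat constructor. Qed.
Lemma pos11 : List.Forall (fun p : sindex => (0 < fst p)%nat) [(1%nat, false); (1%nat, false)].
Proof. repeat constructor. Qed.
Lemma pos2 : List.Forall (fun p : sindex => (0 < fst p)%nat) [(2%nat, false)].
Proof. repeat constructor. Qed.

Lemma L1_closed x : 0 <= x < 1 -> PSeries (Delta [(1%nat, false)]) x = - ln (1 - x).
Proof.
  intros Hx. rewrite <- iter_word by (auto; apply pos1).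
  unfold word. cbn [word_aux repeat app iter_int omega Nat.pred zsgn].
  replace (1 * 1) with 1 by ring. apply RInt_log1; auto.
Qed.

Lemma L11_closed x : 0 <= x < 1 -> PSeries (Delta [(1%nat, false); (1%nat, false)]) x = ln (1 - x) ^ 2 / 2.
Proof.
  intros Hx. rewrite <- iter_word by (auto; apply pos11).
  unfold word. cbn [word_aux repeat app iter_int omega Nat.pred zsgn].
  replace (1 * 1 * 1) with 1 by ring. replace (1 * 1) with 1 by ring.
  rewrite <- RInt_log2 by auto. apply RInt_ext. rewrite Rmin_left, Rmax_right by lra.
  intros t Ht. rewrite RInt_log1 by lra. reflexivity.
Qed.


Lemma trunc1_S k b m : trunc [(k, b)] (S m) = trunc [(k, b)] m + zsgn b ^ (S m) / INR (S m) ^ k.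
Proof. cbn [trunc sumR]. ring. Qed.

Lemma zpow_abs b n : Rabs (zsgn b ^ n) = 1.
Proof. apply pow_pm1_abs, zsgn_pm1. Qed.

Lemma term_bound2 k b m : (2 <= k)%nat ->
  Rabs (zsgn b ^ (S m) / INR (S m) ^ k) <= / INR (S m) ^ 2.
Proof.
  intros Hk. unfold Rdiv. rewrite Rabs_mult, zpow_abs, Rmult_1_l.
  assert (H1 : 1 <= INR (S m)) by (apply (le_INR 1); lia).
  rewrite Rabs_inv, Rabs_right by (apply Rle_ge, pow_le; lra).
  apply Rinv_le_contravar. apply pow_lt; lra. apply Rle_pow; auto.
Qed.

Lemma inv_sq_le m : (1 <= m)%nat -> / INR (S m) ^ 2 <= / INR m - / INR (S m).
Proof.
  intros Hm. assert (H1 : 1 <= INR m) by (apply (le_INR 1); lia). rewrite S_INR.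
  apply (Rmult_le_reg_r (INR m * (INR m + 1) ^ 2)). apply Rmult_lt_0_compat; try lra. apply pow_lt; lra.
  field_simplify; try lra.
Qed.

Lemma single_cauchy k b n j : (2 <= k)%nat -> (1 <= n)%nat ->
  Rabs (trunc [(k, b)] (n + j) - trunc [(k, b)] n) <= / INR n - / INR (n + j).
Proof.
  intros Hk Hn. induction j.
  - rewrite Nat.add_0_r, Rminus_eq_0, Rabs_R0. lra.
  - replace (n + S j)%nat with (S (n + j)) by lia. rewrite trunc1_S.
    pose proof (term_bound2 k b (n + j) Hk). pose proof (inv_sq_le (n + j) ltac:(lia)).
    eapply Rle_trans.
    replace (trunc [(k, b)] (n + j) + zsgn b ^ S (n + j) / INR (S (n + j)) ^ k - trunc [(k, b)] n)
      with ((trunc [(k, b)] (n + j) - trunc [(k, b)] n) + zsgn b ^ S (n + j) / INR (S (n + j)) ^ k) by ring.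
    apply Rabs_triang. lra.
Qed.

Lemma single_conv k b : (2 <= k)%nat ->
  is_lim_seq (trunc [(k, b)]) (euler_sum [(k, b)]) /\
  forall n, (1 <= n)%nat -> Rabs (euler_sum [(k, b)] - trunc [(k, b)] n) <= / INR n.
Proof.
  intros Hk.
  assert (Hex : ex_finite_lim_seq (trunc [(k, b)])).
  { apply ex_lim_seq_cauchy_corr. intros eps.
    destruct (archimed_cor1 eps (cond_pos eps)) as [N [HN HN0]].
    exists N. intros n m Hn Hm.
    assert (Hgen : forall n m, (N <= n)%nat -> (n <= m)%nat -> Rabs (trunc [(k, b)] m - trunc [(k, b)] n) < eps).
    { clear n m Hn Hm. intros n m Hn Hm. replace m with (n + (m - n))%nat by lia.
      eapply Rle_lt_trans. apply single_cauchy; auto; lia.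
      assert (/ INR n <= / INR N). { apply Rinv_le_contravar. apply lt_0_INR; lia. apply le_INR; auto. }
      assert (0 < / INR (n + (m - n))) by (apply Rinv_0_lt_compat, lt_0_INR; lia). lra. }
    destruct (Compare_dec.le_dec n m). rewrite Rabs_minus_sym. auto. apply Hgen; auto. lia. }
  destruct Hex as [l Hl].
  assert (E : euler_sum [(k, b)] = l) by (unfold euler_sum; rewrite (is_lim_seq_unique _ _ Hl); reflexivity).
  rewrite E. split; auto.
  intros n Hn. apply Rabs_le_between'. split.
  - assert (Rbar_le (trunc [(k, b)] n - / INR n) l).
    { apply (is_lim_seq_le_loc (fun _ => trunc [(k, b)] n - / INR n) (trunc [(k,b)])); auto.
      exists n. intros m Hm. replace m with (n + (m - n))%nat by lia.
      pose proof (single_cauchy k b n (m - n) Hk Hn). apply Rabs_le_between' in H.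
      assert (0 < / INR (n + (m - n))) by (apply Rinv_0_lt_compat, lt_0_INR; lia). lra.
      apply is_lim_seq_const. }
    cbn [Rbar_le] in H. lra.
  - assert (Rbar_le l (trunc [(k, b)] n + / INR n)).
    { apply (is_lim_seq_le_loc (trunc [(k,b)]) (fun _ => trunc [(k, b)] n + / INR n)); auto.
      exists n. intros m Hm. replace m with (n + (m - n))%nat by lia.
      pose proof (single_cauchy k b n (m - n) Hk Hn). apply Rabs_le_between' in H.
      assert (0 < / INR (n + (m - n))) by (apply Rinv_0_lt_compat, lt_0_INR; lia). lra.
      apply is_lim_seq_const. }
    cbn [Rbar_le] in H. lra.
Qed.


Lemma term_le_sum (u : nat -> R) N n : (n <= N)%nat -> Rabs (u n) <= sum_f_R0 (fun k => Rabs (u k)) N.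
Proof.
  intros Hn. induction N.
  - replace n with 0%nat by lia. simpl. lra.
  - simpl. assert (0 <= Rabs (u (S N))) by apply Rabs_pos.
    destruct (Nat.eq_dec n (S N)). subst. 
    assert (0 <= sum_f_R0 (fun k => Rabs (u k)) N).
    { apply cond_pos_sum. intros; apply Rabs_pos. } lra.
    assert (Rabs (u n) <= sum_f_R0 (fun k => Rabs (u k)) N) by (apply IHN; lia). lra.
Qed.

Lemma lim_bounded (e : nat -> R) (l : R) : is_lim_seq e l -> exists B, forall n, Rabs (e n) <= B.
Proof.
  intros He. destruct (proj2 (is_lim_seq_spec _ _) He (mkposreal 1 Rlt_0_1)) as [N HN].
  exists (Rabs l + 1 + sum_f_R0 (fun k => Rabs (e k)) N). intros n.
  assert (0 <= sum_f_R0 (fun k => Rabs (e k)) N) by (apply cond_pos_sum; intros; apply Rabs_pos).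
  destruct (Compare_dec.le_lt_dec n N).
  - pose proof (term_le_sum e N n l0). pose proof (Rabs_pos l). lra.
  - specialize (HN n ltac:(lia)). simpl in HN.
    pose proof (Rabs_triang_inv (e n) l). pose proof (Rabs_pos l). lra.
Qed.

Lemma lim0_scal (u : nat -> R) a : is_lim_seq u 0 -> is_lim_seq (fun n => a * u n) 0.
Proof. intros Hu. apply (is_lim_seq_scal_l u a 0) in Hu. simpl in Hu. rewrite Rmult_0_r in Hu. exact Hu. Qed.

Lemma lim0_plus (u v : nat -> R) : is_lim_seq u 0 -> is_lim_seq v 0 -> is_lim_seq (fun n => u n + v n) 0.
Proof. intros Hu Hv. apply (is_lim_seq_plus' u v 0 0) in Hu; auto. rewrite Rplus_0_r in Hu. exact Hu. Qed.

Lemma trunc1_H m : trunc [(1%nat, false)] m = harm m.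
Proof.
  induction m. reflexivity. rewrite trunc1_S, IHm, H_S. simpl zsgn. rewrite pow1, pow_1. unfold Rdiv. ring.
Qed.

Lemma Delta_bound s : List.Forall (fun p : sindex => (0 < fst p)%nat) s -> forall n, Rabs (Delta s n) <= 1.
Proof.
  intros Hpos n. destruct (coef_word_aux s 1 (or_introl eq_refl) Hpos) as [Hv Hc].
  pose proof (coef_bound _ Hv n) as Hb. rewrite Hc, pow1, Rmult_1_l in Hb. exact Hb.
Qed.

Lemma ln4_gt1 : 1 < ln 4.
Proof.
  rewrite <- (ln_exp 1) at 1. apply ln_increasing. apply exp_pos. pose proof exp_le_3. lra.
Qed.

Lemma gamma_pos : 0 <= euler_gamma.
Proof.
  pose proof (gamma_bounds 1 (le_n _)) as Hg. rewrite H_S, H_0 in Hg. simpl INR in Hg.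
  assert (ln 2 < 1).
  { rewrite <- (ln_exp 1). apply ln_increasing. lra. pose proof (exp_ineq1 1 ltac:(lra)). lra. }
  replace (1 + 1) with 2 in Hg by ring. rewrite Rinv_1 in Hg. lra.
Qed.

Definition tseq (n : nat) : R := ln (INR n) + euler_gamma.

Lemma tseq_inf : is_lim_seq tseq p_infty.
Proof.
  unfold tseq. eapply is_lim_seq_plus. apply lim_ln_INR. apply is_lim_seq_const. simpl. constructor.
Qed.

Lemma tseq_ge1 n : (4 <= n)%nat -> 1 <= tseq n.
Proof.
  intros Hn. unfold tseq. pose proof gamma_pos. pose proof ln4_gt1.
  assert (ln 4 <= ln (INR n)). { apply ln_le. lra. replace 4 with (INR 4) by (simpl; ring). apply le_INR; auto. }
  lra.
Qed.

Lemma H_close n : (1 <= n)%nat -> Rabs (harm n - tseq n) <= / INR n.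
Proof. intros Hn. unfold tseq. replace (harm n - (ln (INR n) + euler_gamma)) with (harm n - ln (INR n) - euler_gamma) by ring. apply gamma_close; auto. Qed.

Lemma inv_INR_le1 n : (1 <= n)%nat -> 0 < / INR n <= 1.
Proof. intros Hn. destruct n. lia. apply inv_S_bound. Qed.


Lemma abs5 a b c d e : Rabs (a + b + c - d - e) <= Rabs a + Rabs b + Rabs c + Rabs d + Rabs e.
Proof.
  unfold Rminus. repeat (eapply Rle_trans; [apply Rabs_triang|]). rewrite !Rabs_Ropp.
  pose proof (Rabs_triang a b). pose proof (Rabs_triang (a + b) c). pose proof (Rabs_triang (a+b+c) (-d)).
  rewrite Rabs_Ropp in H1. lra.
Qed.

Lemma abs4 A B C D : Rabs (- A - B + C + D - 0) <= Rabs A + Rabs B + Rabs C + Rabs D.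
Proof.
  rewrite Rminus_0_r. unfold Rminus.
  pose proof (Rabs_triang (- A + - B + C) D). pose proof (Rabs_triang (- A + - B) C).
  pose proof (Rabs_triang (- A) (- B)). rewrite !Rabs_Ropp in *. lra.
Qed.

Lemma C_nonneg (D : nat -> R) a C : D 0%nat = 0 ->
  (forall n, Rabs (D n - a * harm n ^ 2) <= C * (1 + harm n)) -> 0 <= C.
Proof. intros D0 HB. specialize (HB 0%nat). rewrite D0, H_0 in HB. 
  replace (0 - a * 0 ^ 2) with 0 in HB by ring. rewrite Rabs_R0 in HB. lra. Qed.

Lemma lim_inv_tseq : is_lim_seq (fun n => / tseq n) 0.
Proof. replace (Finite 0) with (Rbar_inv p_infty) by reflexivity. apply is_lim_seq_inv. apply tseq_inf. discriminate. Qed.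

Lemma rest_const (D : nat -> R) a C P : D 0%nat = 0 ->
  (forall n, Rabs (D n - a * harm n ^ 2) <= C * (1 + harm n)) ->
  is_lim_seq (fun M => D M - peval P (tseq M)) 0 ->
  forall T, peval (skipn 2 P) T = a.
Proof.
  intros D0 HB HP. pose proof (C_nonneg D a C D0 HB) as C0.
  set (c0 := nth 0 P 0). set (c1 := nth 1 P 0). set (r := skipn 2 P).
  apply (poly_const r tseq a tseq_inf).
  set (K := 1 + 3 * C + 3 * Rabs a + Rabs c0 + Rabs c1).
  apply (is_lim_seq_le_le_loc (fun n => a - K * / tseq n) _ (fun n => a + K * / tseq n)).
  2:{ replace (Finite a) with (Finite (a - 0)) by (f_equal; ring). apply is_lim_seq_minus'.
      apply is_lim_seq_const. apply lim0_scal, lim_inv_tseq. }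
  2:{ replace (Finite a) with (Finite (a + 0)) by (f_equal; ring). apply is_lim_seq_plus'.
      apply is_lim_seq_const. apply lim0_scal, lim_inv_tseq. }
  destruct (proj2 (is_lim_seq_spec _ _) HP (mkposreal 1 Rlt_0_1)) as [N HN].
  exists (max N 4). intros n Hn. specialize (HN n ltac:(lia)). simpl in HN. rewrite Rminus_0_r in HN.
  pose proof (tseq_ge1 n ltac:(lia)) as Ht.
  pose proof (H_close n ltac:(lia)) as Hc. pose proof (inv_INR_le1 n ltac:(lia)) as Hi.
  pose proof (HB n) as Hb. pose proof (H_nonneg n) as Hh.
  pose proof (peval_split P (tseq n)) as Hs. fold c0 c1 r in Hs.
  set (t := tseq n) in *. set (h := harm n) in *. set (y := peval r t) in *.
  assert (X : t * t * (y - a) = (peval P t - D n) + (D n - a * h ^ 2) + a * (h - t) * (h + t) - c0 - c1 * t)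
    by (rewrite Hs; ring).
  assert (Hht : Rabs (h - t) <= 1) by lra.
  assert (Hhp : Rabs (h + t) <= 2 * t + 1).
  { rewrite Rabs_right by lra. apply Rabs_le_between in Hht. lra. }
  assert (Bd : Rabs (t * t * (y - a)) <= K * t).
  { rewrite X. eapply Rle_trans. apply abs5.
    rewrite (Rabs_minus_sym (peval P t)).
    rewrite !Rabs_mult.
    assert (Rabs a * Rabs (h - t) * Rabs (h + t) <= Rabs a * (2 * t + 1)).
    { pose proof (Rabs_pos a). pose proof (Rabs_pos (h - t)). pose proof (Rabs_pos (h+t)).
      apply Rmult_le_compat; try nra. }
    rewrite (Rabs_right t) by lra.
    apply Rabs_le_between in Hht.
    pose proof (Rabs_pos a). pose proof (Rabs_pos c0). pose proof (Rabs_pos c1).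
    unfold K. nra. }
  rewrite !Rabs_mult, (Rabs_right t) in Bd by lra.
  assert (Hy : Rabs (y - a) <= K * / t).
  { apply (Rmult_le_reg_l t). lra. 
    apply (Rmult_le_reg_l t). lra. 
    replace (t * (t * (K * / t))) with (K * t) by (field; lra). rewrite <- Rmult_assoc. exact Bd. }
  apply Rabs_le_between in Hy. lra.
Qed.

Definition fP (c0 c1 a : R) (n : nat) : R :=
  match n with O => 0 | _ => c0 + c1 * harm n + a * harm n ^ 2 end.

Lemma e_lim (D : nat -> R) a c0 c1 P :
  (forall T, peval P T = c0 + c1 * T + a * T ^ 2) ->
  is_lim_seq (fun M => D M - peval P (tseq M)) 0 ->
  is_lim_seq (fun n => D n - fP c0 c1 a n) 0.
Proof.
  intros HPT HP.
  set (w := fun n => Rabs (D n - peval P (tseq n)) + Rabs c1 * / INR n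
                     + Rabs a * (2 * (ln (INR n) / INR n) + (2 * euler_gamma + 1) * / INR n)).
  assert (Hw : is_lim_seq w 0).
  { unfold w. apply lim0_plus. apply lim0_plus.
    - replace (Finite 0) with (Rbar_abs 0) by (simpl; rewrite Rabs_R0; reflexivity).
      apply is_lim_seq_abs. exact HP.
    - apply lim0_scal, lim_inv_INR.
    - apply lim0_scal. apply lim0_plus. apply lim0_scal, lim_lnINR_div. apply lim0_scal, lim_inv_INR. }
  apply (is_lim_seq_le_le_loc (fun n => - w n) _ w).
  2:{ apply (is_lim_seq_ext (fun n => -1 * w n)). intros; ring. apply lim0_scal; auto. }
  2:{ auto. }
  exists 1%nat. intros n Hn. destruct n as [|m]; [lia|]. set (n := S m).
  pose proof (H_close n ltac:(lia)) as Hc. pose proof (inv_INR_le1 n ltac:(lia)) as Hi.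
  pose proof (H_nonneg n) as Hh. pose proof gamma_pos as Hg.
  assert (Hl : 0 <= ln (INR n)). { rewrite <- ln_1. apply ln_le. lra. apply (le_INR 1); lia. }
  change (fP c0 c1 a n) with (c0 + c1 * harm n + a * harm n ^ 2).

  assert (X : D n - (c0 + c1 * harm n + a * harm n ^ 2) =
     (D n - (c0 + c1 * tseq n + a * tseq n ^ 2)) + c1 * (tseq n - harm n) + a * (tseq n - harm n) * (tseq n + harm n)) by ring.
  assert (B1 : Rabs (c1 * (tseq n - harm n)) <= Rabs c1 * / INR n).
  { rewrite Rabs_mult, Rabs_minus_sym. apply Rmult_le_compat_l. apply Rabs_pos. auto. }
  assert (B2 : Rabs (a * (tseq n - harm n) * (tseq n + harm n)) <=
               Rabs a * (2 * (ln (INR n) / INR n) + (2 * euler_gamma + 1) * / INR n)).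
  { rewrite !Rabs_mult, Rabs_minus_sym. rewrite Rmult_assoc. apply Rmult_le_compat_l. apply Rabs_pos.
    unfold tseq in *. apply Rabs_le_between in Hc.
    rewrite (Rabs_right (_ + harm n)) by lra.
    assert (harm n <= ln (INR n) + euler_gamma + 1) by lra.
    apply Rle_trans with (/ INR n * (2 * (ln (INR n) + euler_gamma) + 1)).
    apply Rmult_le_compat; try lra. apply Rabs_pos. apply Rabs_le_between'. lra.
    right. unfold Rdiv. ring. }
  pose proof (Rabs_triang (D n - (c0 + c1 * tseq n + a * tseq n ^ 2) + c1 * (tseq n - harm n)) (a * (tseq n - harm n) * (tseq n + harm n))) as T1.
  pose proof (Rabs_triang (D n - (c0 + c1 * tseq n + a * tseq n ^ 2)) (c1 * (tseq n - harm n))) as T2.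
  rewrite <- X in T1. apply Rabs_le_between. unfold w. rewrite HPT. lra.
Qed.

Definition one1 (n : nat) : R := match n with 1%nat => 1 | _ => 0 end.

Lemma Delta_cons k b r m : Delta ((k, b) :: r) (S m) = zsgn b ^ S m / INR (S m) ^ k * trunc r m.
Proof. unfold Delta. cbn [trunc sumR Nat.pred]. ring. Qed.

Lemma Delta_cons0 k b r : Delta ((k, b) :: r) 0 = 0.
Proof. reflexivity. Qed.

Lemma decomp (s : list sindex) c0 c1 a (e : nat -> R) : s <> [] ->
  (forall n, e n = trunc s n - fP c0 c1 a n) ->
  forall n, Delta s n = c0 * one1 n + c1 * Delta [(1%nat, false)] n
    + a * (2 * Delta [(1%nat, false); (1%nat, false)] n + Delta [(2%nat, false)] n)
    + (e n - PS_incr_1 e n).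
Proof.
  intros Hs He n. destruct s as [|[k b] r]; [congruence|].
  destruct n as [|m].
  - rewrite !Delta_cons0. simpl PS_incr_1. rewrite He. unfold zero; simpl.
    simpl one1. unfold fP. 
    replace (trunc ((k, b) :: r) 0) with 0 by reflexivity. ring.
  - simpl PS_incr_1. rewrite !He.
    assert (E1 : trunc (@cons sindex (k, b) r) (S m) = trunc (@cons sindex (k, b) r) m + zsgn b ^ S m / INR (S m) ^ k * trunc r m)
      by (cbn [trunc sumR Nat.pred]; ring).
    rewrite E1. rewrite !Delta_cons. rewrite trunc1_H.
    change (trunc [] m) with 1. change (zsgn false) with 1. rewrite !pow1.
    destruct m as [|p].
    + simpl one1. unfold fP. rewrite H_S, H_0. simpl INR. field. rewrite pow1; lra.
    + simpl one1.
      change (fP c0 c1 a (S (S p))) with (c0 + c1 * harm (S (S p)) + a * harm (S (S p)) ^ 2).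
      change (fP c0 c1 a (S p)) with (c0 + c1 * harm (S p) + a * harm (S p) ^ 2).
      rewrite (H_S (S p)). field. split; [|apply pow_nonzero]; apply not_0_INR; lia.
Qed.

Lemma expse (u : nat -> R) B x : (forall n, Rabs (u n) <= B) -> 0 <= x < 1 -> ex_pseries u x.
Proof. intros Hu Hx. apply CV_radius_inside. apply (radius_lt u B); auto. rewrite Rabs_right; lra. Qed.

Lemma PS_add (A B : nat -> R) x : ex_pseries A x -> ex_pseries B x ->
  PSeries (fun n => A n + B n) x = PSeries A x + PSeries B x.
Proof. intros HA HB. rewrite <- PSeries_plus by auto. apply PSeries_ext. intros; reflexivity. Qed.

Lemma PS_mul c (A : nat -> R) x : PSeries (fun n => c * A n) x = c * PSeries A x.
Proof. rewrite <- PSeries_scal. apply PSeries_ext. intros; reflexivity. Qed.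

Lemma one1_ps x : 0 <= x < 1 -> PSeries one1 x = x.
Proof.
  intros Hx. rewrite PSeries_decr_1. rewrite PSeries_decr_1.
  rewrite (PSeries_ext _ (fun _ => 0)) by (intros; reflexivity). rewrite PSeries_const_0.
  unfold PS_decr_1. simpl. ring.
  apply (expse _ 1); auto. intros n. unfold PS_decr_1. destruct n as [|[|n]]; simpl; rewrite ?Rabs_R1, ?Rabs_R0; lra.
  apply (expse _ 1); auto. intros n. destruct n as [|[|n]]; simpl; rewrite ?Rabs_R1, ?Rabs_R0; lra.
Qed.

Lemma diff_ps (e : nat -> R) B x : (forall n, Rabs (e n) <= B) -> 0 <= x < 1 -> e 0%nat = 0 ->
  PSeries (fun n => e n - PS_incr_1 e n) x = (1 - x) * PSeries e x.
Proof.
  intros HB Hx He0. assert (B0 : 0 <= B) by (specialize (HB 0%nat); pose proof (Rabs_pos (e 0%nat)); lra).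
  rewrite (PSeries_ext _ (fun n => e n + (-1) * PS_incr_1 e n)) by (intros; ring).
  rewrite PS_add, PS_mul, PSeries_incr_1. ring.
  apply (expse _ B); auto.
  apply (expse _ (1 * B)); auto. intros n. rewrite Rabs_mult, Rabs_m1. apply Rmult_le_compat_l. lra.
  destruct n; simpl. unfold zero; simpl. rewrite Rabs_R0; auto. auto.
Qed.

Lemma Delta2_props : (forall n, 0 <= Delta [(2%nat, false)] n <= 1) /\ ex_series (Delta [(2%nat, false)])
  /\ Series (Delta [(2%nat, false)]) = euler_sum [(2%nat, false)].
Proof.
  assert (Hs : forall N, sum_n (Delta [(2%nat, false)]) N = trunc [(2%nat, false)] N).
  { intros N. rewrite sum_n_Reals. apply sum_Delta. }
  destruct (single_conv 2 false (le_n _)) as [Hl _].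
  split; [|split].
  - intros n. pose proof (Delta_bound _ pos2 n) as Hb. apply Rabs_le_between in Hb.
    split; [|lra]. destruct n as [|m]. simpl. lra.
    rewrite Delta_cons. change (zsgn false) with 1. rewrite pow1. change (trunc [] m) with 1.
    assert (0 < INR (S m) ^ 2) by (apply pow_lt, lt_0_INR; lia).
    apply Rmult_le_pos; try lra. apply Rlt_le, Rdiv_lt_0_compat; lra.
  - exists (euler_sum [(2%nat, false)]).
    assert (X : is_lim_seq (sum_n (Delta [(2%nat, false)])) (euler_sum [(2%nat, false)])).
    { apply (is_lim_seq_ext (trunc [(2%nat, false)])). intros; rewrite Hs; auto. exact Hl. }
    exact X.
  - unfold Series, euler_sum. f_equal. apply Lim_seq_ext. auto.
Qed.

Lemma exp_neg_small d : 0 < d -> exists N, forall n, (N <= n)%nat -> exp (- INR n) < d.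
Proof.
  intros Hd. destruct (archimed_cor1 d Hd) as [N [HN HN0]]. exists N. intros n Hn.
  assert (HNn : INR N <= INR n) by (apply le_INR; auto).
  assert (0 < INR N) by (apply lt_0_INR; auto).
  pose proof (exp_ineq1_le (INR n)).
  rewrite exp_Ropp. eapply Rle_lt_trans; [|exact HN].
  apply Rinv_le_contravar; lra.
Qed.

Lemma ML (s : list sindex) a C P Q :
  s <> [] -> List.Forall (fun p : sindex => (0 < fst p)%nat) s ->
  (forall n, Rabs (trunc s n - a * harm n ^ 2) <= C * (1 + harm n)) ->
  stuffle_reg s P -> shuffle_reg s Q ->
  forall T, peval Q T = peval P T + a * euler_sum [(2%nat, false)].
Proof.
  intros Hne Hpos HB HP HQ.
  assert (D0 : trunc s 0 = 0) by (destruct s as [|[k b] r]; [congruence| reflexivity]).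
  assert (HP' : is_lim_seq (fun M => trunc s M - peval P (tseq M)) 0) by exact HP.
  pose proof (rest_const (trunc s) a C P D0 HB HP') as Hrest.
  set (c0 := nth 0 P 0). set (c1 := nth 1 P 0).
  assert (HPT : forall T, peval P T = c0 + c1 * T + a * T ^ 2).
  { intros T. rewrite peval_split, Hrest. fold c0 c1. ring. }
  set (e := fun n => trunc s n - fP c0 c1 a n).
  assert (He : is_lim_seq e 0) by (apply (e_lim (trunc s) a c0 c1 P); auto).
  destruct (lim_bounded e 0 He) as [Be HBe].
  assert (He0 : e 0%nat = 0) by (unfold e; rewrite D0; simpl; ring).
  destruct Delta2_props as [D2b [D2ex D2S]].
  set (Z2 := euler_sum [(2%nat, false)]) in *.
  assert (Hid : forall x, 0 <= x < 1 ->
    PSeries (Delta s) x = c0 * x + c1 * (- ln (1 - x))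
       + a * (2 * (ln (1 - x) ^ 2 / 2) + PSeries (Delta [(2%nat, false)]) x) + (1 - x) * PSeries e x).
  { intros x Hx.
    rewrite (PSeries_ext _ _ x (decomp s c0 c1 a e Hne (fun n => eq_refl))).
    pose proof (Delta_bound _ pos1) as B1. pose proof (Delta_bound _ pos11) as B11.
    pose proof (Delta_bound _ pos2) as B2.
    assert (Bo : forall n, Rabs (one1 n) <= 1) by (intros [|[|n]]; simpl; rewrite ?Rabs_R1, ?Rabs_R0; lra).
    assert (Bm : forall c (u : nat -> R) B, (forall n, Rabs (u n) <= B) -> forall n, Rabs (c * u n) <= Rabs c * B).
    { intros c u B Hu n. rewrite Rabs_mult. apply Rmult_le_compat_l. apply Rabs_pos. auto. }
    assert (B3 : forall n, Rabs (2 * Delta [(1%nat, false); (1%nat, false)] n + Delta [(2%nat, false)] n) <= 3).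
    { intros n. eapply Rle_trans. apply Rabs_triang. rewrite Rabs_mult. specialize (B11 n). specialize (B2 n).
      rewrite Rabs_right by lra. lra. }
    assert (B4 : forall n, Rabs (e n - PS_incr_1 e n) <= 2 * Be).
    { intros n. unfold Rminus. eapply Rle_trans. apply Rabs_triang. rewrite Rabs_Ropp.
      assert (Rabs (PS_incr_1 e n) <= Be).
      { destruct n; simpl. unfold zero; simpl. rewrite Rabs_R0.
        pose proof (HBe 0%nat); pose proof (Rabs_pos (e 0%nat)); lra. apply HBe. }
      pose proof (HBe n). lra. }
    set (D1 := Delta [(1%nat, false)]) in *. set (D11 := Delta [(1%nat, false); (1%nat, false)]) in *.
    set (D2 := Delta [(2%nat, false)]) in *.
    assert (E1 : ex_pseries (fun n => c0 * one1 n) x) by (apply (expse _ (Rabs c0 * 1)); [apply (Bm c0 one1 1 Bo)|auto]).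
    assert (E2 : ex_pseries (fun n => c1 * D1 n) x) by (apply (expse _ (Rabs c1 * 1)); [apply (Bm c1 D1 1 B1)|auto]).
    assert (E3 : ex_pseries (fun n => a * (2 * D11 n + D2 n)) x) by (apply (expse _ (Rabs a * 3)); [apply (Bm a _ 3 B3)|auto]).
    assert (E4 : ex_pseries (fun n => e n - PS_incr_1 e n) x) by (apply (expse _ (2 * Be)); auto).
    assert (E12 : ex_pseries (fun n => c0 * one1 n + c1 * D1 n) x).
    { apply (expse _ (Rabs c0 * 1 + Rabs c1 * 1)); auto. intros n. eapply Rle_trans. apply Rabs_triang.
      pose proof (Bm c0 _ _ Bo n). pose proof (Bm c1 _ _ B1 n). lra. }
    assert (E123 : ex_pseries (fun n => c0 * one1 n + c1 * D1 n + a * (2 * D11 n + D2 n)) x).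
    { apply (expse _ (Rabs c0 * 1 + Rabs c1 * 1 + Rabs a * 3)); auto. intros n. eapply Rle_trans. apply Rabs_triang.
      eapply Rle_trans. apply Rplus_le_compat_r. apply Rabs_triang.
      pose proof (Bm c0 _ _ Bo n). pose proof (Bm c1 _ _ B1 n). pose proof (Bm a _ _ B3 n). lra. }
    assert (E11 : ex_pseries (fun n => 2 * D11 n) x) by (apply (expse _ (Rabs 2 * 1)); [apply (Bm 2 D11 1 B11)|auto]).
    assert (E22 : ex_pseries D2 x) by (apply (expse _ 1); auto).
    rewrite (PS_add (fun n => c0 * one1 n + c1 * D1 n + a * (2 * D11 n + D2 n)) (fun n => e n - PS_incr_1 e n)) by auto.
    rewrite (PS_add (fun n => c0 * one1 n + c1 * D1 n) (fun n => a * (2 * D11 n + D2 n))) by auto.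
    rewrite (PS_add (fun n => c0 * one1 n) (fun n => c1 * D1 n)) by auto.
    rewrite (PS_mul c0 one1), (PS_mul c1 D1), (PS_mul a (fun n => 2 * D11 n + D2 n)).
    rewrite (PS_add (fun n => 2 * D11 n) D2) by auto. rewrite (PS_mul 2 D11).
    unfold D1, D11. rewrite one1_ps, L1_closed, L11_closed, (diff_ps e Be) by auto. ring. }
  set (R0 := [c0 + a * Z2; c1; a]).
  assert (Hfin : forall T, peval Q T = peval R0 T).
  { apply (poly_eq Q R0 INR is_lim_seq_INR).
    apply is_lim_seq_spec. intros [eta Heta]. simpl.
    destruct (lim_right0_elim _ _ HQ (eta / 4) ltac:(lra)) as [d1 [Hd1 Q1]].
    destruct (lim_right0_elim _ _ (abel_pos _ D2b D2ex) (eta / (4 * (Rabs a + 1)))) as [d2 [Hd2 Q2]].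
    { apply Rdiv_lt_0_compat. lra. pose proof (Rabs_pos a). lra. }
    destruct (lim_right0_elim _ _ (abel_zero e Be HBe He) (eta / 4) ltac:(lra)) as [d3 [Hd3 Q3]].
    set (d4 := eta / (4 * (Rabs c0 + 1))).
    assert (Hd4 : 0 < d4) by (unfold d4; apply Rdiv_lt_0_compat; [lra| pose proof (Rabs_pos c0); lra]).
    set (d := Rmin (Rmin d1 d2) (Rmin (Rmin d3 d4) 1)).
    assert (Hd : 0 < d) by (unfold d; repeat apply Rmin_glb_lt; lra).
    destruct (exp_neg_small d Hd) as [N HN]. exists N. intros n Hn.
    specialize (HN n Hn). set (y := exp (- INR n)) in *.
    assert (Hy0 : 0 < y) by apply exp_pos.
    assert (Hyd : y < d1 /\ y < d2 /\ y < d3 /\ y < d4 /\ y < 1).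
    { assert (d <= d1) by (unfold d; eapply Rle_trans; [apply Rmin_l| apply Rmin_l]).
      assert (d <= d2) by (unfold d; eapply Rle_trans; [apply Rmin_l| apply Rmin_r]).
      assert (d <= d3) by (unfold d; eapply Rle_trans; [apply Rmin_r| eapply Rle_trans; [apply Rmin_l|apply Rmin_l]]).
      assert (d <= d4) by (unfold d; eapply Rle_trans; [apply Rmin_r| eapply Rle_trans; [apply Rmin_l|apply Rmin_r]]).
      assert (d <= 1) by (unfold d; eapply Rle_trans; [apply Rmin_r| apply Rmin_r]).
      lra. }
    destruct Hyd as [Y1 [Y2 [Y3 [Y4 Y5]]]].
    specialize (Q1 y (conj Hy0 Y1)). specialize (Q2 y (conj Hy0 Y2)). specialize (Q3 y (conj Hy0 Y3)).
    assert (Hln : - ln y = INR n) by (unfold y; rewrite ln_exp; ring).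
    rewrite Hln in Q1. rewrite iter_word in Q1 by (auto; lra).
    rewrite Hid in Q1 by lra. replace (1 - (1 - y)) with y in Q1 by ring.
    assert (Hl2 : ln y = - INR n) by lra. rewrite Hl2 in Q1. rewrite D2S in Q2.
    rewrite Rminus_0_r in Q1, Q3.
    assert (Hc0 : Rabs (c0 * y) <= eta / 4).
    { rewrite Rabs_mult, (Rabs_right y) by lra.
      assert (y * (4 * (Rabs c0 + 1)) <= eta).
      { unfold d4 in Y4. apply (Rmult_lt_compat_r (4 * (Rabs c0 + 1))) in Y4.
        unfold Rdiv in Y4. rewrite Rmult_assoc, Rinv_l in Y4. lra.
        pose proof (Rabs_pos c0); lra. pose proof (Rabs_pos c0); lra. }
      pose proof (Rabs_pos c0). nra. }
    assert (Ha2 : Rabs (a * (PSeries (Delta [(2%nat, false)]) (1 - y) - Z2)) <= eta / 4).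
    { rewrite Rabs_mult. pose proof (Rabs_pos a).
      assert (Rabs (PSeries (Delta [(2%nat, false)]) (1 - y) - Z2) * (4 * (Rabs a + 1)) <= eta).
      { apply Rlt_le. apply (Rmult_lt_compat_r (4 * (Rabs a + 1))) in Q2.
        unfold Rdiv in Q2. rewrite Rmult_assoc, Rinv_l in Q2. lra. lra. lra. }
      pose proof (Rabs_pos (PSeries (Delta [(2%nat, false)]) (1 - y) - Z2)). nra. }
    unfold R0. cbn [peval].
    set (L2 := PSeries (Delta [(2%nat, false)]) (1 - y)) in *.
    set (Ps := PSeries e (1 - y)) in *. set (q := peval Q (INR n)) in *.
    replace (q - (c0 + a * Z2 + INR n * (c1 + INR n * (a + INR n * 0))))
      with (- (c0 * (1 - y) + c1 * - - INR n + a * (2 * ((- INR n) ^ 2 / 2) + L2) + y * Ps - q)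
            - c0 * y + a * (L2 - Z2) + y * Ps) by field.
    eapply Rle_lt_trans. apply abs4. lra. }
  intros T. rewrite Hfin, HPT. unfold R0. cbn [peval]. ring.
Qed.

Lemma trunc_S k b (r : list sindex) m :
  trunc ((k, b) :: r) (S m) = trunc ((k, b) :: r) m + zsgn b ^ S m / INR (S m) ^ k * trunc r m.
Proof. cbn [trunc sumR Nat.pred]. reflexivity. Qed.

Lemma trunc_0 k b (r : list sindex) : trunc ((k, b) :: r) 0 = 0.
Proof. reflexivity. Qed.

Lemma term1 b k m : (1 <= k)%nat -> Rabs (zsgn b ^ S m / INR (S m) ^ k) <= / INR (S m).
Proof.
  intros Hk. unfold Rdiv. rewrite Rabs_mult, zpow_abs, Rmult_1_l.
  assert (H1 : 1 <= INR (S m)) by (apply (le_INR 1); lia).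
  rewrite Rabs_inv, Rabs_right by (apply Rle_ge, pow_le; lra).
  apply Rinv_le_contravar. lra. rewrite <- (pow_1 (INR (S m))) at 1. apply Rle_pow; auto.
Qed.

Lemma addsub (x y : R) : x + y - x = y.
Proof. ring. Qed.

Lemma grow (X U : nat -> R) : X 0%nat = 0 -> U 0%nat = 0 ->
  (forall m, Rabs (X (S m) - X m) <= U (S m) - U m) -> forall m, Rabs (X m) <= U m.
Proof.
  intros X0 U0 Hs m. induction m. rewrite X0, U0, Rabs_R0; lra.
  specialize (Hs m). replace (X (S m)) with (X m + (X (S m) - X m)) by ring.
  eapply Rle_trans. apply Rabs_triang. lra.
Qed.

Lemma step_bound (A t u v : R) : Rabs A <= u -> Rabs t <= v -> Rabs (t * A) <= v * u.
Proof. intros. rewrite Rabs_mult. apply Rmult_le_compat; auto; apply Rabs_pos. Qed.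

Lemma G1 k b m : (1 <= k)%nat -> Rabs (trunc [(k, b)] m) <= harm m.
Proof.
  intros Hk. apply (grow (trunc [(k,b)]) harm); auto. intros p. rewrite trunc_S, H_S.
  rewrite addsub. cbn [trunc]. rewrite Rmult_1_r.
  pose proof (term1 b k p Hk). lra.
Qed.

Lemma G2 k b c m : (1 <= k)%nat -> (1 <= fst c)%nat -> Rabs (trunc [(k, b); c] m) <= harm m ^ 2.
Proof.
  intros Hk Hc. destruct c as [k' b']. simpl in Hc.
  apply (grow _ (fun m => harm m ^ 2)). reflexivity. rewrite H_0; simpl; ring.
  intros p. rewrite trunc_S, H_S.
  rewrite addsub.
  pose proof (step_bound _ _ _ _ (G1 k' b' p Hc) (term1 b k p Hk)).
  pose proof (inv_S_bound p). pose proof (H_nonneg p). nra.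
Qed.

Lemma boundA k b k2 b2 c : (2 <= k)%nat -> (1 <= k2)%nat -> (1 <= fst c)%nat ->
  forall n, Rabs (trunc [(k, b); (k2, b2); c] n) <= 4 * harm n.
Proof.
  intros Hk Hk2 Hc. apply (grow _ (fun n => 4 * harm n)). reflexivity. rewrite H_0; ring.
  intros p. rewrite trunc_S, addsub, H_S.
  pose proof (step_bound _ _ _ _ (G2 k2 b2 c p Hk2 Hc) (term_bound2 k b p Hk)) as Hs.
  pose proof (H_sq_le p). pose proof (inv_S_bound p).
  assert (/ INR (S p) ^ 2 * harm p ^ 2 <= 4 * / INR (S p)).
  { assert (HS : 0 < INR (S p)) by (apply lt_0_INR; lia).
    apply (Rmult_le_reg_r (INR (S p) ^ 2)). apply pow_lt; lra.
    replace (/ INR (S p) ^ 2 * harm p ^ 2 * INR (S p) ^ 2) with (harm p ^ 2) by (field; lra).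
    replace (4 * / INR (S p) * INR (S p) ^ 2) with (4 * INR (S p)) by (field; lra).
    rewrite S_INR in *. lra. }
  lra.
Qed.

Lemma E_B k2 b2 c : (2 <= k2)%nat -> (1 <= fst c)%nat ->
  forall m, Rabs (trunc [(k2, b2); c] m) <= 2.
Proof.
  intros Hk Hc. destruct c as [k' b']. simpl in Hc.
  set (E := trunc [(k2, b2); (k', b')]).
  assert (Hinc : forall p, Rabs (E (S p) - E p) <= harm p * / INR (S p) ^ 2).
  { intros p. unfold E. rewrite trunc_S, addsub. rewrite (Rmult_comm (harm p)).
    apply step_bound. apply G1; auto. apply term_bound2; auto. }
  assert (Hm : forall m, (1 <= m)%nat -> Rabs (E m) + (harm m + 1) / INR m <= 2).
  { intros m Hm. induction Hm.
    - specialize (Hinc 0%nat). unfold E in *. rewrite trunc_0, Rminus_0_r in Hinc. rewrite H_0 in Hinc.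
      rewrite H_S, H_0. simpl INR. replace (0 * / 1 ^ 2) with 0 in Hinc by field. field_simplify. lra.
    - specialize (Hinc m).
      assert (HS : 1 <= INR m) by (apply (le_INR 1); auto).
      pose proof (H_nonneg m).
      rewrite H_S, S_INR in *. set (h := harm m) in *. set (x := INR m) in *.
      assert (Habs : Rabs (E (S m)) <= Rabs (E m) + h * / (x + 1) ^ 2).
      { replace (E (S m)) with (E m + (E (S m) - E m)) by ring. eapply Rle_trans. apply Rabs_triang. lra. }
      assert (Hk3 : (h + / (x + 1) + 1) / (x + 1) + h * / (x + 1) ^ 2 <= (h + 1) / x).
      { assert (Ed : (h + 1) / x - ((h + / (x + 1) + 1) / (x + 1) + h * / (x + 1) ^ 2) = (h + 1) / (x * (x + 1) ^ 2))
          by (field; lra).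
        assert (0 <= (h + 1) / (x * (x + 1) ^ 2)).
        { apply Rle_mult_inv_pos. lra. apply Rmult_lt_0_compat. lra. apply pow_lt; lra. }
        lra. }
      lra. }
  intros m. destruct m. unfold E. rewrite trunc_0, Rabs_R0. lra.
  specialize (Hm (S m) ltac:(lia)).
  assert (0 <= (harm (S m) + 1) / INR (S m)).
  { apply Rle_mult_inv_pos. pose proof (H_nonneg (S m)); lra. apply lt_0_INR; lia. }
  unfold E in *. lra.
Qed.

Lemma boundB b k2 b2 c : (2 <= k2)%nat -> (1 <= fst c)%nat ->
  forall n, Rabs (trunc [(1%nat, b); (k2, b2); c] n) <= 2 * harm n.
Proof.
  intros Hk Hc. apply (grow _ (fun n => 2 * harm n)). reflexivity. rewrite H_0; ring.
  intros p. rewrite trunc_S, addsub, H_S.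
  pose proof (step_bound _ _ _ _ (E_B k2 b2 c Hk Hc p) (term1 b 1 p (le_n _))). lra.
Qed.


Definition gfun (r : list sindex) (m : nat) : R :=
  match m with O => 0 | S p => trunc r p / INR (S p) end.

Definition Salt (m : nat) : R := ((-1) ^ m - 1) / 2.

Lemma Salt_S m : Salt (S m) = Salt m + (-1) ^ S m.
Proof. unfold Salt. simpl. field. Qed.

Lemma Salt_abs m : Rabs (Salt m) <= 1.
Proof.
  unfold Salt. pose proof (pow_pm1_abs (-1) m (or_intror eq_refl)) as Hp.
  assert (Hp2 : Rabs ((-1) ^ m) <= 1) by lra. apply Rabs_le_between in Hp2. apply Rabs_le_between. lra.
Qed.

Lemma W_S (r : list sindex) m :
  trunc ((1%nat, true) :: r) (S m) = trunc ((1%nat, true) :: r) m + (-1) ^ S m * gfun r (S m).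
Proof. rewrite trunc_S. simpl zsgn. unfold gfun. rewrite pow_1. unfold Rdiv. ring. Qed.

Lemma abel_alt (r : list sindex) (V : nat -> R) :
  0 <= V 0%nat -> 0 <= V 1%nat ->
  (forall m, (1 <= m)%nat -> V m + Rabs (gfun r (S m) - gfun r m) <= V (S m)) ->
  forall m, Rabs (trunc ((1%nat, true) :: r) m) <= V m + Rabs (gfun r m).
Proof.
  intros V0 V1 HV.
  assert (Key : forall m, Rabs (trunc ((1%nat, true) :: r) m - Salt m * gfun r m) <= V m).
  { induction m as [|m IH].
    - rewrite trunc_0. match goal with |- Rabs ?z <= _ => replace z with 0 by (unfold Salt; simpl; field) end. rewrite Rabs_R0; auto.
    - destruct m as [|p].
      + rewrite W_S, trunc_0. match goal with |- Rabs ?z <= _ => replace z with 0 by (unfold Salt; simpl; field) end. rewrite Rabs_R0; auto.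
      + rewrite W_S, Salt_S.
        replace (trunc ((1%nat, true) :: r) (S p) + (-1) ^ S (S p) * gfun r (S (S p)) -
                 (Salt (S p) + (-1) ^ S (S p)) * gfun r (S (S p)))
          with ((trunc ((1%nat, true) :: r) (S p) - Salt (S p) * gfun r (S p))
                - Salt (S p) * (gfun r (S (S p)) - gfun r (S p))) by ring.
        specialize (HV (S p) ltac:(lia)).
        unfold Rminus at 1. eapply Rle_trans. apply Rabs_triang. rewrite Rabs_Ropp, Rabs_mult.
        pose proof (Salt_abs (S p)). pose proof (Rabs_pos (gfun r (S (S p)) - gfun r (S p))).
        assert (Rabs (Salt (S p)) * Rabs (gfun r (S (S p)) - gfun r (S p)) <= Rabs (gfun r (S (S p)) - gfun r (S p))).
        { rewrite <- (Rmult_1_l (Rabs (gfun r (S (S p)) - gfun r (S p)))) at 2.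
          apply Rmult_le_compat_r; auto. }
        lra. }
  intros m. specialize (Key m).
  replace (trunc ((1%nat, true) :: r) m) with ((trunc ((1%nat, true) :: r) m - Salt m * gfun r m) + Salt m * gfun r m) by ring.
  eapply Rle_trans. apply Rabs_triang. rewrite Rabs_mult.
  pose proof (Salt_abs m). pose proof (Rabs_pos (gfun r m)).
  assert (Rabs (Salt m) * Rabs (gfun r m) <= Rabs (gfun r m)).
  { rewrite <- (Rmult_1_l (Rabs (gfun r m))) at 2. apply Rmult_le_compat_r; auto. }
  lra.
Qed.

Lemma E_C c : (1 <= fst c)%nat -> forall m, Rabs (trunc [(1%nat, true); c] m) <= 3.
Proof.
  intros Hc. destruct c as [k b]. simpl in Hc. intros m.
  set (V := fun m => match m with O => 0 | S p => 2 - (harm p + 2) / INR (S p) end).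
  assert (HV : forall m, V m <= 2).
  { intros [|p]; unfold V; cbv beta iota. lra. assert (0 <= (harm p + 2) / INR (S p)).
    { apply Rle_mult_inv_pos. pose proof (H_nonneg p); lra. apply lt_0_INR; lia. } lra. }
  assert (Hg : forall m, Rabs (gfun [(k, b)] m) <= 1).
  { intros [|p]; cbn [gfun]. rewrite Rabs_R0; lra.
    unfold Rdiv. rewrite Rabs_mult. pose proof (G1 k b p Hc). pose proof (H_le_n p).
    pose proof (inv_S_bound p). rewrite (Rabs_right (/ _)) by lra.
    assert (Rabs (trunc [(k, b)] p) * / INR (S p) <= INR p * / INR (S p)).
    { apply Rmult_le_compat_r; lra. }
    assert (INR p * / INR (S p) <= 1).
    { pose proof (pos_INR p). rewrite S_INR in *. apply (Rmult_le_reg_r (INR p + 1)). lra.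
      rewrite Rmult_assoc, Rinv_l by lra. lra. }
    lra. }
  eapply Rle_trans. apply (abel_alt [(k, b)] V).
  - simpl; lra.
  - unfold V; cbv beta iota. rewrite H_0. simpl INR. lra.
  - intros m' Hm'. destruct m' as [|p]; [lia|]. unfold V; cbv beta iota. cbn [gfun].
    rewrite trunc_S.
    pose proof (G1 k b p Hc) as HF. set (F := trunc [(k, b)] p) in *.
    pose proof (H_nonneg p). rewrite H_S.
    replace (INR (S (S p))) with (INR (S p) + 1) by (rewrite (S_INR (S p)); ring).
    assert (Hx : 1 <= INR (S p)) by (apply (le_INR 1); lia).
    assert (Ht0 : forall T, T = zsgn b ^ S p / INR (S p) ^ k * trunc [] p -> Rabs T <= / INR (S p)).
    { intros T ->. cbn [trunc]. rewrite Rmult_1_r. apply term1; auto. }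
    set (x := INR (S p)) in *. set (h := harm p) in *.
    assert (Geq : forall T, (F + T) / (x + 1) - F / x = T / (x + 1) - F / (x * (x + 1))) by (intros; field; lra).
    rewrite Geq.
    match goal with |- context [Rabs (?T / (x + 1) - _)] => set (t := T) in * end.
    assert (Ht : Rabs t <= / x) by (apply Ht0; reflexivity).
    assert (A1 : Rabs (t / (x + 1) - F / (x * (x + 1))) <= / x / (x + 1) + h / (x * (x + 1))).
    { unfold Rminus. eapply Rle_trans. apply Rabs_triang. rewrite Rabs_Ropp.
      unfold Rdiv. rewrite !Rabs_mult, !Rabs_inv, (Rabs_right (x + 1)), (Rabs_right (x * (x+1))) by nra.
      apply Rplus_le_compat. apply Rmult_le_compat_r. left; apply Rinv_0_lt_compat; lra. auto.
      apply Rmult_le_compat_r. left; apply Rinv_0_lt_compat; nra. auto. }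
    assert (A2 : 2 - (h + 2) / x + (/ x / (x + 1) + h / (x * (x + 1))) = 2 - (h + / x + 2) / (x + 1))
      by (field; lra).
    lra.
  - pose proof (HV m). pose proof (Hg m). lra.
Qed.

Lemma boundC b c : (1 <= fst c)%nat ->
  forall n, Rabs (trunc [(1%nat, b); (1%nat, true); c] n) <= 3 * harm n.
Proof.
  intros Hc. apply (grow _ (fun n => 3 * harm n)). reflexivity. rewrite H_0; ring.
  intros p. rewrite trunc_S, addsub, H_S.
  pose proof (step_bound _ _ _ _ (E_C c Hc p) (term1 b 1 p (le_n _))). lra.
Qed.

Lemma boundD k2 b2 c : (1 <= k2)%nat -> (1 <= fst c)%nat ->
  forall n, Rabs (trunc [(1%nat, true); (k2, b2); c] n) <= 5 * (1 + harm n).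
Proof.
  intros Hk Hc n.
  set (r := [(k2, b2); c]).
  set (V := fun m => match m with O => 0 | S p => 5 * (harm (S p) - 1) end).
  assert (HE : forall p, Rabs (trunc r p) <= 4 * INR p).
  { intros p. eapply Rle_trans. apply G2; auto. apply H_sq_le. }
  assert (Hg : forall m, Rabs (gfun r m) <= 4).
  { intros [|p]; cbn [gfun]. rewrite Rabs_R0; lra.
    unfold Rdiv. rewrite Rabs_mult. pose proof (HE p).
    pose proof (inv_S_bound p). rewrite (Rabs_right (/ _)) by lra.
    assert (Rabs (trunc r p) * / INR (S p) <= 4 * INR p * / INR (S p)).
    { apply Rmult_le_compat_r; lra. }
    assert (INR p * / INR (S p) <= 1).
    { rewrite S_INR in *. apply (Rmult_le_reg_r (INR p + 1)). pose proof (pos_INR p). lra.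
      rewrite Rmult_assoc, Rinv_l by (pose proof (pos_INR p); lra). lra. }
    lra. }
  eapply Rle_trans. apply (abel_alt r V).
  - simpl; lra.
  - unfold V; cbv beta iota. rewrite H_S, H_0. simpl INR. rewrite Rinv_1. lra.
  - intros m' Hm'. destruct m' as [|p]; [lia|]. unfold V; cbv beta iota. cbn [gfun].
    unfold r. rewrite trunc_S. fold r.
    assert (Ht0 : forall T, T = zsgn b2 ^ S p / INR (S p) ^ k2 * trunc [c] p -> Rabs T <= 1).
    { intros T ->. pose proof (step_bound _ _ _ _ (G1 (fst c) (snd c) p Hc) (term1 b2 k2 p Hk)) as Hs.
      destruct c as [k' b']. cbn [fst snd] in Hs.
      pose proof (H_le_n p). pose proof (inv_S_bound p). pose proof (H_nonneg p).
      assert (/ INR (S p) * harm p <= 1).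
      { pose proof (pos_INR p). rewrite S_INR in *. apply (Rmult_le_reg_r (INR p + 1)). lra.
        rewrite Rmult_comm, <- Rmult_assoc, Rinv_r by lra. lra. }
      lra. }
    pose proof (HE p) as HF. set (F := trunc r p) in *.
    rewrite (H_S (S p)).
    replace (INR (S (S p))) with (INR (S p) + 1) by (rewrite (S_INR (S p)); ring).
    assert (Hx : 1 <= INR (S p)) by (apply (le_INR 1); lia).
    assert (HpS : INR (S p) = INR p + 1) by apply S_INR.
    set (x := INR (S p)) in *.
    assert (Geq : forall T, (F + T) / (x + 1) - F / x = T / (x + 1) - F / (x * (x + 1))) by (intros; field; lra).
    rewrite Geq.
    match goal with |- context [Rabs (?T / (x + 1) - _)] => set (t := T) in * end.
    assert (Ht : Rabs t <= 1) by (apply Ht0; reflexivity).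
    assert (A1 : Rabs (t / (x + 1) - F / (x * (x + 1))) <= 1 / (x + 1) + 4 / (x + 1)).
    { unfold Rminus. eapply Rle_trans. apply Rabs_triang. rewrite Rabs_Ropp.
      unfold Rdiv. rewrite !Rabs_mult, !Rabs_inv, (Rabs_right (x + 1)), (Rabs_right (x * (x+1))) by nra.
      apply Rplus_le_compat. apply Rmult_le_compat_r. left; apply Rinv_0_lt_compat; lra. auto.
      replace (/ (x * (x + 1))) with (/ x * / (x + 1)) by (field; lra).
      rewrite <- Rmult_assoc. apply Rmult_le_compat_r. left; apply Rinv_0_lt_compat; lra.
      apply (Rmult_le_reg_r x). lra. rewrite Rmult_assoc, Rinv_l by lra. lra. }
    lra.
  - pose proof (Hg n). destruct n; unfold V; cbv beta iota. pose proof (H_nonneg 0). lra. lra.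
Qed.

Lemma addsub2 (T a b c : R) : T + a - b - (T - c) = a - b + c.
Proof. ring. Qed.

Lemma bound2 c : (2 <= fst c)%nat ->
  forall n, Rabs (trunc [(1%nat, false); (1%nat, false); c] n - euler_sum [c] / 2 * harm n ^ 2) <= 4 * (1 + harm n).
Proof.
  intros Hc. destruct c as [k b]. cbn [fst] in Hc.
  destruct (single_conv k b Hc) as [_ Ht].
  set (z := euler_sum [(k, b)]) in *.
  set (F := trunc [(k, b)]). set (E := trunc [(1%nat, false); (k, b)]).
  assert (HF1 : Rabs (F 1%nat) <= 1).
  { unfold F. eapply Rle_trans. apply G1; lia. rewrite H_S, H_0. simpl. lra. }
  assert (Hz : Rabs z <= 2).
  { pose proof (Ht 1%nat (le_n _)). simpl INR in H. rewrite Rinv_1 in H. fold F in H.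
    pose proof (Rabs_triang (z - F 1%nat) (F 1%nat)). replace (z - F 1%nat + F 1%nat) with z in H0 by ring. lra. }
  assert (ES : forall m, E (S m) = E m + / INR (S m) * F m).
  { intros m. unfold E, F. cbn [trunc sumR Nat.pred zsgn]. rewrite pow1, pow_1. unfold Rdiv. ring. }
  assert (C1 : forall m, (1 <= m)%nat -> Rabs (E m - z * harm m) <= 3 - / INR m).
  { intros m Hm. induction Hm.
    - rewrite ES. unfold E. rewrite trunc_0. unfold F. rewrite trunc_0. rewrite H_S, H_0. simpl INR.
      rewrite Rinv_1. replace (0 + 1 * 0 - z * (0 + 1)) with (- z) by ring. rewrite Rabs_Ropp. lra.
    - rewrite ES, H_S.
      replace (E m + / INR (S m) * F m - z * (harm m + / INR (S m)))
        with ((E m - z * harm m) + / INR (S m) * (F m - z)) by ring.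
      eapply Rle_trans. apply Rabs_triang. rewrite Rabs_mult, (Rabs_minus_sym (F m)).
      pose proof (Ht m Hm). fold F in H. pose proof (inv_S_bound m).
      rewrite (Rabs_right (/ INR (S m))) by lra.
      assert (Hm1 : 1 <= INR m) by (apply (le_INR 1); auto).
      assert (/ INR (S m) * Rabs (z - F m) <= / INR (S m) * / INR m) by (apply Rmult_le_compat_l; lra).
      assert (Eq : 3 - / INR m + / INR (S m) * / INR m = 3 - / INR (S m)).
      { rewrite S_INR. field. lra. }
      lra. }
  assert (C2 : forall m, Rabs (E m - z * harm m) <= 3).
  { intros [|m]. unfold E. rewrite trunc_0, H_0. replace (0 - z * 0) with 0 by ring. rewrite Rabs_R0. lra.
    pose proof (C1 (S m) ltac:(lia)). pose proof (inv_S_bound m). lra. }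
  intros n. eapply Rle_trans.
  apply (grow (fun n => trunc [(1%nat, false); (1%nat, false); (k, b)] n - z / 2 * harm n ^ 2) (fun n => 4 * harm n)).
  - rewrite trunc_0, H_0. ring.
  - rewrite H_0; ring.
  - intros m.
    assert (ED : trunc [(1%nat, false); (1%nat, false); (k, b)] (S m) = trunc [(1%nat, false); (1%nat, false); (k, b)] m + / INR (S m) * E m)
      by (unfold E; cbn [trunc sumR Nat.pred zsgn]; rewrite pow1, pow_1; unfold Rdiv; ring).
    cbv beta. rewrite ED, H_S, addsub2.
    replace (/ INR (S m) * E m - z / 2 * (harm m + / INR (S m)) ^ 2 + z / 2 * harm m ^ 2)
      with (/ INR (S m) * (E m - z * harm m) - z / 2 * (/ INR (S m) * / INR (S m))) by (field; apply not_0_INR; lia).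
    pose proof (inv_S_bound m) as Hi. set (x := / INR (S m)) in *.
    unfold Rminus. eapply Rle_trans. apply Rabs_triang. rewrite Rabs_Ropp, !Rabs_mult.
    rewrite (Rabs_right x) by lra. pose proof (C2 m) as C2m. unfold Rminus in C2m.
    assert (Rabs (z / 2) <= 1) by (unfold Rdiv; rewrite Rabs_mult, (Rabs_right (/2)) by lra; lra).
    assert (x * Rabs (E m + - (z * harm m)) <= x * 3) by (apply Rmult_le_compat_l; lra).
    assert (Rabs (z / 2) * (x * x) <= 1 * x).
    { apply Rmult_le_compat. apply Rabs_pos. nra. auto. nra. }
    lra.
  - pose proof (H_nonneg n). lra.
Qed.


Theorem lemma5p1 :
  (forall (a b c : sindex) (w : nat),
      (0 < fst a)%nat -> (0 < fst b)%nat -> (0 < fst c)%nat ->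
      (fst a + fst b + fst c)%nat = w -> (4 <= w)%nat ->
      (a, b) <> ((1%nat, false), (1%nat, false)) ->
      forall P Q : list R,
        stuffle_reg [a; b; c] P -> shuffle_reg [a; b; c] Q ->
        forall T : R, peval Q T = peval P T)
  /\
  (forall (c : sindex) (w : nat),
      (4 <= w)%nat -> fst c = (w - 2)%nat ->
      forall P Q : list R,
        stuffle_reg [(1%nat, false); (1%nat, false); c] P ->
        shuffle_reg [(1%nat, false); (1%nat, false); c] Q ->
        forall T : R,
          peval Q T = peval P T
                      + / 2 * euler_sum [(2%nat, false)] * euler_sum [c]).
Proof.
  split.
  - intros [k1 b1] [k2 b2] c w Ha Hb Hc Hw H4 Hab P Q HP HQ T.
    cbn [fst] in Ha, Hb.
    assert (Hpos : List.Forall (fun p : sindex => (0 < fst p)%nat) [(k1, b1); (k2, b2); c]).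
    { repeat constructor; auto. }
    assert (HB : exists C, forall n, Rabs (trunc [(k1, b1); (k2, b2); c] n - 0 * harm n ^ 2) <= C * (1 + harm n)).
    { assert (Conv : forall C, (forall n, Rabs (trunc [(k1, b1); (k2, b2); c] n) <= C * (1 + harm n)) ->
              forall n, Rabs (trunc [(k1, b1); (k2, b2); c] n - 0 * harm n ^ 2) <= C * (1 + harm n)).
      { intros C HC n. rewrite Rmult_0_l, Rminus_0_r. apply HC. }
      destruct (Compare_dec.le_lt_dec 2 k1) as [Hk1|Hk1].
      - exists 4. apply Conv. intros n. eapply Rle_trans. apply boundA; auto.
        pose proof (H_nonneg n). lra.
      - assert (k1 = 1%nat) by lia. subst k1. destruct b1.
        + exists 5. apply Conv. intros n. apply boundD; auto.
        + destruct (Compare_dec.le_lt_dec 2 k2) as [Hk2|Hk2].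
          * exists 2. apply Conv. intros n. eapply Rle_trans. apply boundB; auto.
            pose proof (H_nonneg n). lra.
          * assert (k2 = 1%nat) by lia. subst k2. destruct b2.
            -- exists 3. apply Conv. intros n. eapply Rle_trans. apply boundC; auto.
               pose proof (H_nonneg n). lra.
            -- exfalso. apply Hab. reflexivity. }
    destruct HB as [C HB].
    rewrite (ML [(k1, b1); (k2, b2); c] 0 C P Q) by (auto; discriminate). ring.
  - intros c w H4 Hc P Q HP HQ T.
    assert (Hc2 : (2 <= fst c)%nat) by lia.
    assert (Hpos : List.Forall (fun p : sindex => (0 < fst p)%nat) [(1%nat, false); (1%nat, false); c]).
    { repeat constructor; simpl; lia. }
    rewrite (ML [(1%nat, false); (1%nat, false); c] (euler_sum [c] / 2) 4 P Q); auto.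
    + unfold Rdiv. ring.
    + discriminate.
    + apply bound2; auto.
Qed.
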